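(* There is a constant $C>0$ such that for every $p\in\mathbb N$ and every polynomial $u$ of degree $\le p$ on $\widehat K$, writing $u=u_{\mathcal V}+u_{\mathcal E_1}+u_{\mathcal E_2}+u_{\mathcal E_3}+u_{\mathcal I}$ with $u_{\mathcal V}=\sum_{j=1}^3\alpha_j^{\mathcal V}\varphi_j^{\mathcal V}$, $u_{\mathcal E_m}=\sum_{j=0}^{p-2}\alpha_j^{\mathcal E_m}\varphi_j^{\mathcal E_m}$, $u_{\mathcal I}=\sum_{i+j\le p-3}\alpha^{\mathcal I}_{(ij)}\varphi^{\mathcal I}_{(ij)}$ (the expansion in the basis described in the context), one has $$\|u_{\mathcal V}\|^2_{L^2(\widehat K)}\le C\sum_{j=1}^3|\alpha^{\mathcal V}_j|^2,\quad\|u_{\mathcal E_m}\|^2_{L^2(\widehat K)}\le C\sum_{j=0}^{p-2}|\alpha_j^{\mathcal E_m}|^2\ (m=1,2,3),\quad\|u_{\mathcal I}\|^2_{L^2(\widehat K)}=\sum_{i+j\le p-3}|\alpha^{\mathcal I}_{(ij)}|^2,$$ and consequently $$\|u\|^2_{L^2(\widehat K)}\le C\Big(\sum_{j=1}^3|\alpha_j^{\mathcal V}|^2+\sum_{m=1}^3\sum_{j=0}^{p-2}|\alpha_j^{\mathcal E_m}|^2+\sum_{i+j\le p-3}|\alpha^{\mathcal I}_{(ij)}|^2\Big).$$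
   Context: $\widehat K=\mathrm{conv}\{(0,0),(1,0),(0,1)\}$ with barycentric coordinates $\lambda_1,\lambda_2,\lambda_3$ and edges $\mathcal E_1,\mathcal E_2,\mathcal E_3$. $\ell_n$ are the Legendre polynomials, $L_n(s):=\int_{-1}^s\ell_{n-1}(t)\,dt$ ($n\ge1$), $P_n^{(\alpha,\beta)}$ the Jacobi polynomials (orthogonal on $(-1,1)$ w.r.t. weight $(1-x)^\alpha(1+x)^\beta$, standard normalization), $L_n^{\mathcal S}(s,t):=t^nL_n(s/t)$, $P_n^{\mathcal S,(\alpha,\beta)}(s,t):=t^nP_n^{(\alpha,\beta)}(s/t)$. The basis of polynomials of degree $\le p$ on $\widehat K$: vertex functions $\varphi^{\mathcal V}_i:=\lambda_i$; for edge $\mathcal E_m$ with endpoints $e_1,e_2$, $\varphi^{\mathcal E_m}_i:=\sqrt{\tfrac{2i+3}{2}}L^{\mathcal S}_{i+2}(\lambda_{e_2}-\lambda_{e_1},\lambda_{e_1}+\lambda_{e_2})$, $0\le i\le p-2$; cell functions $\varphi^{\mathcal I}_{(i,j)}:=c_{ij}\lambda_1\lambda_2\lambda_3P_i^{\mathcal S,(2,2)}(\lambda_1-\lambda_2,\lambda_1+\lambda_2)P_j^{(2i+5,2)}(2\lambda_3-1)$, $0\le i+j\le p-3$, with $c_{ij}$ chosen so that $\|\varphi^{\mathcal I}_{(i,j)}\|_{L^2(\widehat K)}=1$. *)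

(* Defs.v *)
From Stdlib Require Import Reals Lra Lia List Arith.
From Stdlib Require Binomial.
From Coquelicot Require Import Coquelicot.
Open Scope R_scope.

Definition Rsum (n : nat) (f : nat -> R) : R :=
  fold_right Rplus 0 (map f (seq 0 n)).

Definition inK (x y : R) : Prop := 0 <= x /\ 0 <= y /\ x + y <= 1.

(* Squared L2 norm on K (iterated Riemann integral; integrands here are
   polynomials, hence continuous). *)
Definition L2sq (f : R -> R -> R) : R :=
  RInt (fun x => RInt (fun y => (f x y) ^ 2) 0 (1 - x)) 0 1.

(* Barycentric coordinates: vertex 1 = (0,0), vertex 2 = (1,0), vertex 3 = (0,1). *)
Definition lam (i : nat) (x y : R) : R :=
  match i with
  | 1%nat => 1 - x - y
  | 2%nat => x
  | 3%nat => y
  | _ => 0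
  end.

(* Jacobi polynomial P_n^{(a,b)} in the standard normalization
   (P_n^{(a,b)}(1) = binom(n+a, n)), for integer parameters a, b >= 0:
   P_n^{(a,b)}(x) = sum_{s=0}^n C(n+a,n-s) C(n+b,s) ((x-1)/2)^s ((x+1)/2)^(n-s). *)
Definition jacobiP (a b n : nat) (x : R) : R :=
  Rsum (S n) (fun s =>
    Binomial.C (n + a) (n - s) * Binomial.C (n + b) s
    * ((x - 1) / 2) ^ s * ((x + 1) / 2) ^ (n - s)).

Definition legendre (n : nat) (x : R) : R := jacobiP 0 0 n x.

Definition intLegendre (n : nat) (s : R) : R :=
  RInt (legendre (n - 1)) (-1) s.

(* Scaled versions: L^S_n(s,t) = t^n L_n(s/t), P^{S,(a,b)}_n(s,t) = t^n P_n^{(a,b)}(s/t).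
   (At points of K where t = 0 one also has s = 0, and these formulas give the
   value 0 of the corresponding homogeneous polynomial when n >= 1.) *)
Definition intLegendreS (n : nat) (s t : R) : R := t ^ n * intLegendre n (s / t).
Definition jacobiPS (a b n : nat) (s t : R) : R := t ^ n * jacobiP a b n (s / t).

(* Endpoints (e1, e2) of edge E_m: E_1 = [V1,V2], E_2 = [V2,V3], E_3 = [V3,V1]. *)
Definition edge1 (m : nat) : nat := m.
Definition edge2 (m : nat) : nat := match m with 1%nat => 2%nat | 2%nat => 3%nat | _ => 1%nat end.

Definition phiV (i : nat) (x y : R) : R := lam i x y.

Definition phiE (m i : nat) (x y : R) : R :=
  sqrt ((2 * INR i + 3) / 2) *
  intLegendreS (i + 2)
    (lam (edge2 m) x y - lam (edge1 m) x y)
    (lam (edge1 m) x y + lam (edge2 m) x y).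

Definition phiI0 (i j : nat) (x y : R) : R :=
  lam 1 x y * lam 2 x y * lam 3 x y
  * jacobiPS 2 2 i (lam 1 x y - lam 2 x y) (lam 1 x y + lam 2 x y)
  * jacobiP (2 * i + 5) 2 j (2 * lam 3 x y - 1).

Definition cI (i j : nat) : R := / sqrt (L2sq (phiI0 i j)).

Definition phiI (i j : nat) (x y : R) : R := cI i j * phiI0 i j x y.

Definition uV (aV : nat -> R) (x y : R) : R :=
  Rsum 3 (fun k => aV (S k) * phiV (S k) x y).

(* sum over 0 <= j <= p-2, i.e. j < p-1 (empty when p <= 1). *)
Definition uE (p m : nat) (a : nat -> R) (x y : R) : R :=
  Rsum (Nat.pred p) (fun j => a j * phiE m j x y).

(* sum over i + j <= p - 3 (empty when p <= 2). *)
Definition uI (p : nat) (a : nat -> nat -> R) (x y : R) : R :=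
  Rsum p (fun i => Rsum p (fun j =>
    if (i + j + 3 <=? p)%nat then a i j * phiI i j x y else 0)).

Definition sqV (aV : nat -> R) : R := Rsum 3 (fun k => (aV (S k)) ^ 2).
Definition sqE (p : nat) (a : nat -> R) : R := Rsum (Nat.pred p) (fun j => (a j) ^ 2).
Definition sqI (p : nat) (a : nat -> nat -> R) : R :=
  Rsum p (fun i => Rsum p (fun j =>
    if (i + j + 3 <=? p)%nat then (a i j) ^ 2 else 0)).

Definition is_poly_deg (p : nat) (u : R -> R -> R) : Prop :=
  exists c : nat -> nat -> R, forall x y,
    u x y = Rsum (S p) (fun i => Rsum (S p) (fun j =>
      if (i + j <=? p)%nat then c i j * x ^ i * y ^ j else 0)).

(* Main.v *)
Require Import Defs.
From Stdlib Require Import Reals Lra Lia List Arith Psatz.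
From Stdlib Require Binomial.
From Coquelicot Require Import Coquelicot.
Open Scope R_scope.

Lemma fold_Rplus_acc (l : list R) a : fold_right Rplus a l = fold_right Rplus 0 l + a.
Proof. induction l; simpl; [lra| rewrite IHl; lra]. Qed.

Lemma Rsum_S n f : Rsum (S n) f = Rsum n f + f n.
Proof.
  unfold Rsum. rewrite seq_S, map_app, fold_right_app. simpl.
  rewrite fold_Rplus_acc. lra.
Qed.

Lemma Rsum_0 f : Rsum 0 f = 0.
Proof. reflexivity. Qed.

Lemma Rsum_shift n f : Rsum (S n) f = f 0%nat + Rsum n (fun i => f (S i)).
Proof.
  unfold Rsum. simpl. f_equal. rewrite <- seq_shift, map_map. reflexivity.
Qed.

Lemma Rsum_ext n f g : (forall i, (i < n)%nat -> f i = g i) -> Rsum n f = Rsum n g.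
Proof.
  induction n; intros H; [reflexivity|]. rewrite !Rsum_S. rewrite IHn by (intros; apply H; lia).
  rewrite H by lia. reflexivity.
Qed.

Lemma Rsum_plus n f g : Rsum n (fun i => f i + g i) = Rsum n f + Rsum n g.
Proof. induction n; [rewrite !Rsum_0; lra|]. rewrite !Rsum_S, IHn. lra. Qed.

Lemma Rsum_scal n c f : Rsum n (fun i => c * f i) = c * Rsum n f.
Proof. induction n; [rewrite !Rsum_0; lra|]. rewrite !Rsum_S, IHn. lra. Qed.

Lemma Rsum_le n f g : (forall i, (i < n)%nat -> f i <= g i) -> Rsum n f <= Rsum n g.
Proof.
  induction n; intros H; [rewrite !Rsum_0; lra|]. rewrite !Rsum_S.
  assert (Rsum n f <= Rsum n g) by (apply IHn; intros; apply H; lia).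
  assert (f n <= g n) by (apply H; lia). lra.
Qed.

Lemma Rsum_nonneg n f : (forall i, (i < n)%nat -> 0 <= f i) -> 0 <= Rsum n f.
Proof.
  intros H. replace 0 with (Rsum n (fun _ => 0)). apply Rsum_le; auto.
  induction n; [reflexivity|]. rewrite Rsum_S, IHn; [lra|]. intros; apply H; lia.
Qed.

Lemma Rsum_zero n f : (forall i, (i < n)%nat -> f i = 0) -> Rsum n f = 0.
Proof.
  induction n; intros H; [reflexivity|]. rewrite Rsum_S, IHn, H by (try intros; try apply H; lia). lra.
Qed.

Lemma Rsum_swap n m (f : nat -> nat -> R) :
  Rsum n (fun i => Rsum m (fun j => f i j)) = Rsum m (fun j => Rsum n (fun i => f i j)).
Proof.
  induction n. { rewrite Rsum_0. symmetry. apply Rsum_zero. reflexivity. }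
  rewrite Rsum_S, IHn. rewrite <- Rsum_plus. apply Rsum_ext. intros. rewrite Rsum_S. reflexivity.
Qed.

Lemma Rsum_mult n m f g : Rsum n f * Rsum m g = Rsum n (fun i => Rsum m (fun j => f i * g j)).
Proof.
  induction n. { rewrite !Rsum_0; lra. }
  rewrite !Rsum_S. rewrite Rmult_plus_distr_r, IHn. f_equal.
  rewrite Rsum_scal. reflexivity.
Qed.

Lemma Rsum_delta n k f : (k < n)%nat -> Rsum n (fun i => if Nat.eqb i k then f i else 0) = f k.
Proof.
  induction n; intros H; [lia|]. rewrite Rsum_S.
  destruct (Nat.eq_dec k n).
  - subst. rewrite Nat.eqb_refl. rewrite Rsum_zero; [lra|].
    intros i Hi. destruct (Nat.eqb_spec i n); [lia|reflexivity].
  - rewrite IHn by lia. destruct (Nat.eqb_spec n k); [lia|lra].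
Qed.

Lemma is_RInt_plus' (f g : R -> R) a b If Ig :
  is_RInt f a b If -> is_RInt g a b Ig -> is_RInt (fun x => f x + g x) a b (If + Ig).
Proof. intros. apply (is_RInt_plus f g); auto. Qed.

Lemma is_RInt_scal' (f : R -> R) a b c If :
  is_RInt f a b If -> is_RInt (fun x => c * f x) a b (c * If).
Proof. intros. apply (is_RInt_scal f); auto. Qed.

Lemma is_RInt_ext' (f g : R -> R) a b l :
  (forall x, Rmin a b < x < Rmax a b -> f x = g x) -> is_RInt f a b l -> is_RInt g a b l.
Proof. intros. eapply is_RInt_ext; eauto. Qed.

Lemma is_RInt_eqv (f : R -> R) a b (l l' : R) : l = l' -> is_RInt f a b l -> is_RInt f a b l'.
Proof. intros ->; auto. Qed.

Lemma is_RInt_Rsum n (f : nat -> R -> R) (v : nat -> R) a b :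
  (forall k, (k < n)%nat -> is_RInt (f k) a b (v k)) ->
  is_RInt (fun x => Rsum n (fun k => f k x)) a b (Rsum n v).
Proof.
  induction n; intros H.
  - simpl. eapply is_RInt_eqv; [|apply (is_RInt_const a b 0)]. cbn. unfold scal; simpl. unfold mult; simpl. ring.
  - apply is_RInt_ext' with (f := fun x => Rsum n (fun k => f k x) + f n x).
    { intros. rewrite Rsum_S. reflexivity. }
    rewrite Rsum_S. apply is_RInt_plus'. apply IHn; intros; apply H; lia. apply H; lia.
Qed.

Lemma is_RInt_mono_shift a b i :
  is_RInt (fun x => (x - a) ^ i) a b ((b - a) ^ (S i) / INR (S i)).
Proof.
  assert (HS : INR (S i) <> 0) by (apply not_0_INR; lia).
  eapply is_RInt_eqv; [| apply (is_RInt_derive (fun x => (x - a) ^ (S i) / INR (S i)))].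
  - unfold minus, plus, opp; cbn -[pow INR]. replace (a - a) with 0 by ring. rewrite pow_i by lia. field. auto.
  - intros x _. auto_derive; auto. change (match i with 0%nat => 1 | S _ => INR i + 1 end) with (INR (S i)). unfold Rminus. field. auto.
  - intros x _. apply (ex_derive_continuous (fun x => (x - a) ^ i)). auto_derive. auto.
Qed.

Definition betaV (L : R) (i j : nat) : R :=
  L ^ (i + j + 1) * INR (fact i) * INR (fact j) / INR (fact (i + j + 1)).

Lemma fact_S_R n : INR (fact (S n)) = INR (S n) * INR (fact n).
Proof. change (fact (S n)) with (S n * fact n)%nat. rewrite mult_INR. reflexivity. Qed.

Lemma is_RInt_beta a b i j :
  is_RInt (fun x => (x - a) ^ i * (b - x) ^ j) a b (betaV (b - a) i j).
Proof.
  revert i. induction j; intros i.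
  - apply is_RInt_eqv with ((b - a) ^ (S i) / INR (S i)).
    + unfold betaV. replace (i + 0 + 1)%nat with (S i) by lia. rewrite fact_S_R. simpl (fact 0).
      pose proof (INR_fact_neq_0 i). assert (INR (S i) <> 0) by (apply not_0_INR; lia).
      simpl (INR 1). field. auto.
    + eapply is_RInt_ext'; [|apply is_RInt_mono_shift]. intros; simpl; ring.
  - apply is_RInt_ext' with (f := fun x => (b - a) * ((x - a) ^ i * (b - x) ^ j) + (-1) * ((x - a) ^ (S i) * (b - x) ^ j)).
    { intros. simpl. ring. }
    eapply is_RInt_eqv. 2: apply is_RInt_plus'; apply is_RInt_scal'; apply IHj.
    unfold betaV. replace (S i + j + 1)%nat with (S (i + j + 1)) by lia.
    replace (i + S j + 1)%nat with (S (i + j + 1)) by lia.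
    rewrite !fact_S_R. rewrite !S_INR, !plus_INR. simpl pow.
    pose proof (INR_fact_neq_0 i). pose proof (INR_fact_neq_0 j). pose proof (INR_fact_neq_0 (i+j+1)).
    pose proof (pos_INR i). pose proof (pos_INR j).
    simpl INR. field. repeat split; lra.
Qed.

Definition inside (x y : R) : Prop := 0 < x /\ 0 < y /\ x + y < 1.

Definition mon := (R * nat * nat)%type.

Definition evalL (l : list mon) (x y : R) : R :=
  fold_right (fun (t : mon) acc => let '(c, i, j) := t in c * x ^ i * y ^ j + acc) 0 l.

Definition scalL (c : R) (l : list mon) : list mon :=
  map (fun t : mon => let '(c', i, j) := t in (c * c', i, j)) l.

Definition mulL (l1 l2 : list mon) : list mon :=
  flat_map (fun t : mon => let '(c, i, j) := t in
    map (fun t' : mon => let '(c', i', j') := t' in (c * c', (i + i')%nat, (j + j')%nat)) l2) l1.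

Lemma evalL_app l1 l2 x y : evalL (l1 ++ l2) x y = evalL l1 x y + evalL l2 x y.
Proof. induction l1 as [|[[c i] j] l IH]; simpl; [lra|]. rewrite IH. ring. Qed.

Lemma evalL_scal c l x y : evalL (scalL c l) x y = c * evalL l x y.
Proof. induction l as [|[[c' i] j] l IH]; simpl; [ring|]. rewrite IH. ring. Qed.

Lemma evalL_mul l1 l2 x y : evalL (mulL l1 l2) x y = evalL l1 x y * evalL l2 x y.
Proof.
  induction l1 as [|[[c i] j] l IH]; simpl; [ring|].
  unfold mulL in *. simpl. rewrite evalL_app, IH.
  assert (H : evalL (map (fun t' : mon => let '(c', i', j') := t' in (c * c', (i + i')%nat, (j + j')%nat)) l2) x y
              = c * x ^ i * y ^ j * evalL l2 x y).
  { clear IH. induction l2 as [|[[c' i'] j'] l2 IH2]; simpl; [ring|]. rewrite IH2, !pow_add. ring. }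
  rewrite H. ring.
Qed.

Definition Poly2 (f : R -> R -> R) : Prop :=
  exists l, forall x y, inside x y -> f x y = evalL l x y.

Lemma Poly2_ext f g : (forall x y, inside x y -> f x y = g x y) -> Poly2 f -> Poly2 g.
Proof. intros H [l Hl]. exists l. intros. rewrite <- H by auto. auto. Qed.

Lemma Poly2_const c : Poly2 (fun _ _ => c).
Proof. exists ((c, 0%nat, 0%nat) :: nil). intros; simpl; ring. Qed.

Lemma Poly2_x : Poly2 (fun x _ => x).
Proof. exists ((1, 1%nat, 0%nat) :: nil). intros; simpl; ring. Qed.

Lemma Poly2_y : Poly2 (fun _ y => y).
Proof. exists ((1, 0%nat, 1%nat) :: nil). intros; simpl; ring. Qed.

Lemma Poly2_plus f g : Poly2 f -> Poly2 g -> Poly2 (fun x y => f x y + g x y).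
Proof. intros [l1 H1] [l2 H2]. exists (l1 ++ l2). intros. rewrite evalL_app, H1, H2; auto. Qed.

Lemma Poly2_mult f g : Poly2 f -> Poly2 g -> Poly2 (fun x y => f x y * g x y).
Proof. intros [l1 H1] [l2 H2]. exists (mulL l1 l2). intros. rewrite evalL_mul, H1, H2; auto. Qed.

Lemma Poly2_scal c f : Poly2 f -> Poly2 (fun x y => c * f x y).
Proof. intros. apply Poly2_mult; auto. apply Poly2_const. Qed.

Lemma Poly2_opp f : Poly2 f -> Poly2 (fun x y => - f x y).
Proof. intros. eapply Poly2_ext; [|apply (Poly2_scal (-1)); eauto]. intros; simpl; ring. Qed.

Lemma Poly2_minus f g : Poly2 f -> Poly2 g -> Poly2 (fun x y => f x y - g x y).
Proof. intros. apply Poly2_plus; auto. apply Poly2_opp; auto. Qed.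

Lemma Poly2_pow f n : Poly2 f -> Poly2 (fun x y => f x y ^ n).
Proof.
  intros H. induction n. { eapply Poly2_ext; [|apply (Poly2_const 1)]. intros; simpl; ring. }
  eapply Poly2_ext; [|apply (Poly2_mult _ _ H IHn)]. intros; simpl; ring.
Qed.

Lemma Poly2_Rsum n (F : nat -> R -> R -> R) :
  (forall k, (k < n)%nat -> Poly2 (F k)) -> Poly2 (fun x y => Rsum n (fun k => F k x y)).
Proof.
  induction n; intros H.
  - eapply Poly2_ext; [|apply (Poly2_const 0)]. intros. reflexivity.
  - eapply Poly2_ext; [|apply Poly2_plus; [apply IHn|apply H]].
    + intros. simpl. rewrite Rsum_S. reflexivity.
    + intros; apply H; lia.
    + lia.
Qed.

Ltac poly2 :=
  repeat first
    [ apply Poly2_plus | apply Poly2_minus | apply Poly2_mult | apply Poly2_opp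
    | apply Poly2_pow | apply Poly2_const | apply Poly2_x | apply Poly2_y ].

Definition IK (l : list mon) : R :=
  fold_right (fun (t : mon) acc => let '(c, i, j) := t in
     c * INR (fact i) * INR (fact j) / INR (fact (i + j + 2)) + acc) 0 l.

Definition Jxy (f : R -> R -> R) : R := RInt (fun x => RInt (fun y => f x y) 0 (1 - x)) 0 1.
Definition Jyx (f : R -> R -> R) : R := RInt (fun y => RInt (fun x => f x y) 0 (1 - y)) 0 1.
Definition Jtx (f : R -> R -> R) : R := RInt (fun t => RInt (fun x => f x (t - x)) 0 t) 0 1.

Lemma fact_ne0 n : INR (fact n) <> 0.
Proof. apply INR_fact_neq_0. Qed.

Lemma INR_S_ne0 n : INR (S n) <> 0.
Proof. apply not_0_INR; lia. Qed.

Lemma Rmin01 a : 0 <= a -> Rmin 0 a = 0.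
Proof. intros; apply Rmin_left; auto. Qed.
Lemma Rmax01 a : 0 <= a -> Rmax 0 a = a.
Proof. intros; apply Rmax_right; auto. Qed.

Definition innerxy (l : list mon) (x : R) : R :=
  fold_right (fun (t : mon) acc => let '(c, i, j) := t in
     c * x ^ i * ((1 - x) ^ (S j) / INR (S j)) + acc) 0 l.

Lemma is_RInt_evalL_y l x b :
  is_RInt (fun y => evalL l x y) 0 b
    (fold_right (fun (t : mon) acc => let '(c, i, j) := t in
     c * x ^ i * (b ^ (S j) / INR (S j)) + acc) 0 l).
Proof.
  induction l as [|[[c i] j] l IH]; unfold evalL in *; cbn [fold_right] in *.
  - eapply is_RInt_eqv; [|apply (is_RInt_const 0 b 0)]. cbn. unfold scal; simpl. unfold mult; simpl. ring.
  - apply is_RInt_plus'; auto.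
    apply is_RInt_ext' with (f := fun y => (c * x ^ i) * (y - 0) ^ j).
    { intros. rewrite Rminus_0_r. ring. }
    apply is_RInt_scal'. rewrite <- (Rminus_0_r b) at 2. apply is_RInt_mono_shift.
Qed.

Lemma is_RInt_evalL_x l y b :
  is_RInt (fun x => evalL l x y) 0 b
    (fold_right (fun (t : mon) acc => let '(c, i, j) := t in
     c * (b ^ (S i) / INR (S i)) * y ^ j + acc) 0 l).
Proof.
  induction l as [|[[c i] j] l IH]; unfold evalL in *; cbn [fold_right] in *.
  - eapply is_RInt_eqv; [|apply (is_RInt_const 0 b 0)]. cbn. unfold scal; simpl. unfold mult; simpl. ring.
  - apply is_RInt_plus'; auto.
    apply is_RInt_ext' with (f := fun x => (c * y ^ j) * (x - 0) ^ i).
    { intros. rewrite Rminus_0_r. ring. }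
    eapply is_RInt_eqv; [|apply is_RInt_scal'; apply is_RInt_mono_shift]. rewrite Rminus_0_r. ring.
Qed.

Lemma IK_app l1 l2 : IK (l1 ++ l2) = IK l1 + IK l2.
Proof. induction l1 as [|[[c i] j] l IH]; simpl; [lra|]. rewrite IH. ring. Qed.

Lemma IK_scal c l : IK (scalL c l) = c * IK l.
Proof. induction l as [|[[c' i] j] l IH]; simpl; [ring|]. rewrite IH. field. apply fact_ne0. Qed.

Lemma Jxy_is (f : R -> R -> R) l : (forall x y, inside x y -> f x y = evalL l x y) ->
  is_RInt (fun x => RInt (fun y => f x y) 0 (1 - x)) 0 1 (IK l).
Proof.
  intros Hf.
  apply is_RInt_ext' with (f := fun x => fold_right (fun (t : mon) acc => let '(c, i, j) := t in
     c * x ^ i * ((1 - x) ^ (S j) / INR (S j)) + acc) 0 l).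
  { intros x Hx. rewrite Rmin01, Rmax01 in Hx by lra. symmetry.
    rewrite (RInt_ext _ (fun y => evalL l x y)).
    - apply is_RInt_unique, is_RInt_evalL_y.
    - intros y Hy. rewrite Rmin01, Rmax01 in Hy by lra. apply Hf. red; lra. }
  clear Hf. induction l as [|[[c i] j] l IH]; cbn [fold_right IK].
  - eapply is_RInt_eqv; [|apply (is_RInt_const 0 1 0)]. cbn. unfold scal; simpl. unfold mult; simpl. ring.
  - apply is_RInt_plus'; [|apply IH].
    apply is_RInt_ext' with (f := fun x => (c / INR (S j)) * ((x - 0) ^ i * (1 - x) ^ (S j))).
    { intros. rewrite Rminus_0_r. field. apply INR_S_ne0. }
    eapply is_RInt_eqv; [|apply is_RInt_scal'; apply is_RInt_beta].
    unfold betaV. rewrite Rminus_0_r, pow1. replace (i + S j + 1)%nat with (i + j + 2)%nat by lia.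
    rewrite fact_S_R. field. split; [apply fact_ne0| apply INR_S_ne0].
Qed.

Lemma Jyx_is (f : R -> R -> R) l : (forall x y, inside x y -> f x y = evalL l x y) ->
  is_RInt (fun y => RInt (fun x => f x y) 0 (1 - y)) 0 1 (IK l).
Proof.
  intros Hf.
  apply is_RInt_ext' with (f := fun y => fold_right (fun (t : mon) acc => let '(c, i, j) := t in
     c * ((1 - y) ^ (S i) / INR (S i)) * y ^ j + acc) 0 l).
  { intros y Hy. rewrite Rmin01, Rmax01 in Hy by lra. symmetry.
    rewrite (RInt_ext _ (fun x => evalL l x y)).
    - apply is_RInt_unique, is_RInt_evalL_x.
    - intros x Hx. rewrite Rmin01, Rmax01 in Hx by lra. apply Hf. red; lra. }
  clear Hf. induction l as [|[[c i] j] l IH]; cbn [fold_right IK].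
  - eapply is_RInt_eqv; [|apply (is_RInt_const 0 1 0)]. cbn. unfold scal; simpl. unfold mult; simpl. ring.
  - apply is_RInt_plus'; [|apply IH].
    apply is_RInt_ext' with (f := fun y => (c / INR (S i)) * ((y - 0) ^ j * (1 - y) ^ (S i))).
    { intros. rewrite Rminus_0_r. field. apply INR_S_ne0. }
    eapply is_RInt_eqv; [|apply is_RInt_scal'; apply is_RInt_beta].
    unfold betaV. rewrite Rminus_0_r, pow1. replace (j + S i + 1)%nat with (i + j + 2)%nat by lia.
    rewrite fact_S_R. field. split; [apply fact_ne0| apply INR_S_ne0].
Qed.

Lemma is_RInt_evalL_t l t :
  is_RInt (fun x => evalL l x (t - x)) 0 t
    (fold_right (fun (m : mon) acc => let '(c, i, j) := m in c * betaV (t - 0) i j + acc) 0 l).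
Proof.
  induction l as [|[[c i] j] l IH]; unfold evalL in *; cbn [fold_right] in *.
  - eapply is_RInt_eqv; [|apply (is_RInt_const 0 t 0)]. cbn. unfold scal; simpl. unfold mult; simpl. ring.
  - apply is_RInt_plus'; auto.
    apply is_RInt_ext' with (f := fun x => c * ((x - 0) ^ i * (t - x) ^ j)).
    { intros. rewrite Rminus_0_r. ring. }
    apply is_RInt_scal'. apply is_RInt_beta.
Qed.

Lemma Jtx_is (f : R -> R -> R) l : (forall x y, inside x y -> f x y = evalL l x y) ->
  is_RInt (fun t => RInt (fun x => f x (t - x)) 0 t) 0 1 (IK l).
Proof.
  intros Hf.
  apply is_RInt_ext' with (f := fun t => fold_right (fun (m : mon) acc => let '(c, i, j) := m in
     c * betaV (t - 0) i j + acc) 0 l).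
  { intros t Ht. rewrite Rmin01, Rmax01 in Ht by lra. symmetry.
    rewrite (RInt_ext _ (fun x => evalL l x (t - x))).
    - apply is_RInt_unique, is_RInt_evalL_t.
    - intros x Hx. rewrite Rmin01, Rmax01 in Hx by lra. apply Hf. red; lra. }
  clear Hf. induction l as [|[[c i] j] l IH]; cbn [fold_right IK].
  - eapply is_RInt_eqv; [|apply (is_RInt_const 0 1 0)]. cbn. unfold scal; simpl. unfold mult; simpl. ring.
  - apply is_RInt_plus'; [|apply IH].
    apply is_RInt_ext' with (f := fun t => (c * INR (fact i) * INR (fact j) / INR (fact (i + j + 1))) * (t - 0) ^ (i + j + 1)).
    { intros. unfold betaV. field. apply fact_ne0. }
    eapply is_RInt_eqv; [|apply is_RInt_scal'; apply is_RInt_mono_shift].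
    rewrite Rminus_0_r, pow1. replace (i + j + 2)%nat with (S (i + j + 1)) by lia.
    rewrite fact_S_R. field. split; [apply fact_ne0| apply INR_S_ne0].
Qed.

Lemma Poly2_inner_ex f x : Poly2 f -> 0 < x < 1 -> ex_RInt (fun y => f x y) 0 (1 - x).
Proof.
  intros [l Hl] Hx. eexists. eapply is_RInt_ext'; [|apply (is_RInt_evalL_y l x (1 - x))].
  intros y Hy. rewrite Rmin01, Rmax01 in Hy by lra. symmetry. apply Hl. red; lra.
Qed.

Lemma Jxy_IK f l : (forall x y, inside x y -> f x y = evalL l x y) -> Jxy f = IK l.
Proof. intros. apply is_RInt_unique, Jxy_is; auto. Qed.

Lemma Jyx_IK f l : (forall x y, inside x y -> f x y = evalL l x y) -> Jyx f = IK l.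
Proof. intros. apply is_RInt_unique, Jyx_is; auto. Qed.

Lemma Jtx_IK f l : (forall x y, inside x y -> f x y = evalL l x y) -> Jtx f = IK l.
Proof. intros. apply is_RInt_unique, Jtx_is; auto. Qed.

Lemma Jxy_Jyx f : Poly2 f -> Jxy f = Jyx f.
Proof. intros [l Hl]. rewrite (Jxy_IK _ l), (Jyx_IK _ l); auto. Qed.

Lemma Jxy_Jtx f : Poly2 f -> Jxy f = Jtx f.
Proof. intros [l Hl]. rewrite (Jxy_IK _ l), (Jtx_IK _ l); auto. Qed.

Lemma Jxy_plus f g : Poly2 f -> Poly2 g -> Jxy (fun x y => f x y + g x y) = Jxy f + Jxy g.
Proof.
  intros [l1 H1] [l2 H2]. rewrite (Jxy_IK f l1), (Jxy_IK g l2), (Jxy_IK (fun x y => f x y + g x y) (l1 ++ l2)); auto.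
  apply IK_app. intros. rewrite evalL_app, H1, H2; auto.
Qed.

Lemma Jxy_scal c f : Poly2 f -> Jxy (fun x y => c * f x y) = c * Jxy f.
Proof.
  intros [l1 H1]. rewrite (Jxy_IK f l1), (Jxy_IK (fun x y => c * f x y) (scalL c l1)); auto.
  apply IK_scal. intros. rewrite evalL_scal, H1; auto.
Qed.

Lemma Jxy_ext f g : (forall x y, inside x y -> f x y = g x y) -> Poly2 f -> Jxy f = Jxy g.
Proof.
  intros H [l Hl]. rewrite (Jxy_IK f l), (Jxy_IK g l); auto. intros; rewrite <- H; auto.
Qed.

Lemma Jxy_Rsum n (F : nat -> R -> R -> R) : (forall k, (k < n)%nat -> Poly2 (F k)) ->
  Jxy (fun x y => Rsum n (fun k => F k x y)) = Rsum n (fun k => Jxy (F k)).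
Proof.
  induction n; intros H.
  - rewrite Rsum_0. rewrite (Jxy_IK _ nil). reflexivity. intros; reflexivity.
  - rewrite Rsum_S. rewrite <- IHn by (intros; apply H; lia).
    assert (P1 : Poly2 (fun x y => Rsum n (fun k => F k x y))) by (apply Poly2_Rsum; intros; apply H; lia).
    assert (P2 : Poly2 (F n)) by (apply H; lia).
    rewrite <- (Jxy_plus (fun x y => Rsum n (fun k => F k x y)) (F n)) by auto.
    apply Jxy_ext. intros; rewrite Rsum_S; reflexivity. apply Poly2_Rsum; intros; apply H; lia.
Qed.

Lemma Jxy_ge0 f : Poly2 f -> (forall x y, inside x y -> 0 <= f x y) -> 0 <= Jxy f.
Proof.
  intros Hp Hf. destruct Hp as [l Hl] eqn:E. unfold Jxy. apply RInt_ge_0; [lra| |].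
  - eexists. apply (Jxy_is _ l Hl).
  - intros x Hx. apply RInt_ge_0; [lra| apply Poly2_inner_ex; auto; rewrite <- E; exists l; auto |].
    intros y Hy. apply Hf. red; lra.
Qed.

Lemma Jxy_le f g : Poly2 f -> Poly2 g -> (forall x y, inside x y -> f x y <= g x y) -> Jxy f <= Jxy g.
Proof.
  intros Hf Hg H. assert (0 <= Jxy (fun x y => g x y + (-1) * f x y)).
  { apply Jxy_ge0. poly2; auto. intros x y Hxy; specialize (H x y Hxy); lra. }
  rewrite Jxy_plus, Jxy_scal in H0; auto. lra. apply Poly2_scal; auto.
Qed.

Definition bmon := (R * nat)%type.
Definition evalB (l : list bmon) (x : R) : R :=
  fold_right (fun (t : bmon) acc => let '(c, k) := t in c * (1 + x) ^ k + acc) 0 l.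
Definition degB (d : nat) (l : list bmon) : Prop := List.Forall (fun t : bmon => (snd t <= d)%nat) l.
Definition lcB (d : nat) (l : list bmon) : R :=
  fold_right (fun (t : bmon) acc => let '(c, k) := t in (if Nat.eqb k d then c else 0) + acc) 0 l.
Definition scalB (c : R) (l : list bmon) : list bmon := map (fun t : bmon => let '(c', k) := t in (c * c', k)) l.
Definition mulB (l1 l2 : list bmon) : list bmon :=
  flat_map (fun t : bmon => let '(c, k) := t in map (fun t' : bmon => let '(c', k') := t' in (c * c', (k + k')%nat)) l2) l1.

Lemma evalB_app l1 l2 x : evalB (l1 ++ l2) x = evalB l1 x + evalB l2 x.
Proof. induction l1 as [|[c k] l IH]; simpl; [lra|]. rewrite IH. ring. Qed.
Lemma evalB_scal c l x : evalB (scalB c l) x = c * evalB l x.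
Proof. induction l as [|[c' k] l IH]; simpl; [ring|]. rewrite IH. ring. Qed.
Lemma lcB_app d l1 l2 : lcB d (l1 ++ l2) = lcB d l1 + lcB d l2.
Proof. induction l1 as [|[c k] l IH]; simpl; [lra|]. rewrite IH. ring. Qed.
Lemma lcB_scal d c l : lcB d (scalB c l) = c * lcB d l.
Proof. induction l as [|[c' k] l IH]; simpl; [ring|]. rewrite IH. destruct (Nat.eqb k d); ring. Qed.
Lemma degB_app d l1 l2 : degB d l1 -> degB d l2 -> degB d (l1 ++ l2).
Proof. intros; apply Forall_app; auto. Qed.
Lemma degB_scal d c l : degB d l -> degB d (scalB c l).
Proof. unfold degB, scalB. intros H. apply Forall_map. eapply Forall_impl; [|apply H]. intros [c' k]; simpl; auto. Qed.
Lemma degB_mono d d' l : (d <= d')%nat -> degB d l -> degB d' l.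
Proof. intros Hd H. eapply Forall_impl; [|apply H]. intros; simpl in *; lia. Qed.
Lemma lcB_over d l : degB d l -> lcB (S d) l = 0.
Proof.
  induction l as [|[c k] l IH]; intros H; simpl; [ring|]. inversion H; subst. simpl in *.
  destruct (Nat.eqb_spec k (S d)); [lia|]. rewrite IH; auto. ring.
Qed.

Lemma evalB_mul l1 l2 x : evalB (mulB l1 l2) x = evalB l1 x * evalB l2 x.
Proof.
  induction l1 as [|[c k] l IH]; simpl; [ring|].
  unfold mulB in *. simpl. rewrite evalB_app, IH.
  assert (H : evalB (map (fun t' : bmon => let '(c', k') := t' in (c * c', (k + k')%nat)) l2) x
              = c * (1 + x) ^ k * evalB l2 x).
  { clear IH. induction l2 as [|[c' k'] l2 IH2]; simpl; [ring|]. rewrite IH2, !pow_add. ring. }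
  rewrite H. ring.
Qed.

Lemma degB_mul d1 d2 l1 l2 : degB d1 l1 -> degB d2 l2 -> degB (d1 + d2) (mulB l1 l2).
Proof.
  intros H1 H2. induction l1 as [|[c k] l IH]; [constructor|].
  inversion H1; subst. unfold mulB. simpl. apply Forall_app. split.
  - apply Forall_map. eapply Forall_impl; [|apply H2]. intros [c' k']; simpl in *. lia.
  - apply IH; auto.
Qed.

Lemma lcB_mul d1 d2 l1 l2 : degB d1 l1 -> degB d2 l2 ->
  lcB (d1 + d2) (mulB l1 l2) = lcB d1 l1 * lcB d2 l2.
Proof.
  intros H1 H2. induction l1 as [|[c k] l IH]; simpl; [ring|].
  inversion H1; subst. simpl in *. unfold mulB in *. simpl. rewrite lcB_app, IH by auto.
  assert (lcB (d1 + d2) (map (fun t' : bmon => let '(c', k') := t' in (c * c', (k + k')%nat)) l2)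
          = (if Nat.eqb k d1 then c else 0) * lcB d2 l2).
  { clear IH. induction l2 as [|[c' k'] l2 IH2]; simpl; [ring|]. inversion H2; subst. simpl in *.
    rewrite IH2 by auto.
    destruct (Nat.eqb_spec (k + k') (d1 + d2)); destruct (Nat.eqb_spec k d1); destruct (Nat.eqb_spec k' d2);
      try lia; ring. }
  rewrite H. ring.
Qed.

Definition BP (d : nat) (e : R) (f : R -> R) : Prop :=
  exists l, degB d l /\ lcB d l = e /\ forall x, f x = evalB l x.

Lemma BP_ext d e f g : (forall x, f x = g x) -> BP d e f -> BP d e g.
Proof. intros H [l [H1 [H2 H3]]]. exists l. repeat split; auto. intros; rewrite <- H; auto. Qed.
Lemma BP_eqe d e e' f : e = e' -> BP d e f -> BP d e' f.
Proof. intros ->; auto. Qed.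
Lemma BP_const c : BP 0 c (fun _ => c).
Proof. exists ((c, 0%nat) :: nil). repeat split. repeat constructor. simpl; ring. intros; simpl; ring. Qed.
Lemma BP_1px : BP 1 1 (fun x => 1 + x).
Proof. exists ((1, 1%nat) :: nil). repeat split. repeat constructor. simpl; ring. intros; simpl; ring. Qed.
Lemma BP_plus d e1 e2 f g : BP d e1 f -> BP d e2 g -> BP d (e1 + e2) (fun x => f x + g x).
Proof.
  intros [l1 [A1 [B1 C1]]] [l2 [A2 [B2 C2]]]. exists (l1 ++ l2). repeat split.
  apply degB_app; auto. rewrite lcB_app; congruence. intros; rewrite evalB_app, C1, C2; auto.
Qed.
Lemma BP_mult d1 d2 e1 e2 f g : BP d1 e1 f -> BP d2 e2 g -> BP (d1 + d2) (e1 * e2) (fun x => f x * g x).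
Proof.
  intros [l1 [A1 [B1 C1]]] [l2 [A2 [B2 C2]]]. exists (mulB l1 l2). repeat split.
  apply degB_mul; auto. rewrite lcB_mul; congruence. intros; rewrite evalB_mul, C1, C2; auto.
Qed.
Lemma BP_scal d c e f : BP d e f -> BP d (c * e) (fun x => c * f x).
Proof.
  intros H. eapply BP_ext; [|apply (BP_mult 0 d c e); [apply BP_const|apply H]]. intros; simpl; ring.
Qed.
Lemma BP_up d e f : BP d e f -> BP (S d) 0 f.
Proof.
  intros [l [A [B C]]]. exists l. repeat split; auto. eapply degB_mono; [|apply A]; lia. apply lcB_over; auto.
Qed.
Lemma BP_up' d d' e f : (d < d')%nat -> BP d e f -> exists e', BP d' e' f.
Proof.
  intros H [l [A [B C]]]. exists (lcB d' l). exists l. repeat split; auto. eapply degB_mono; [|apply A]; lia.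
Qed.
Lemma BP_pow d e f n : BP d e f -> BP (d * n) (e ^ n) (fun x => f x ^ n).
Proof.
  intros H. induction n.
  - replace (d * 0)%nat with 0%nat by lia. eapply BP_ext; [|apply BP_const]. intros; simpl; auto.
  - replace (d * S n)%nat with (d + d * n)%nat by lia. eapply BP_ext; [|apply (BP_mult _ _ _ _ _ _ H IHn)].
    intros; simpl; ring.
Qed.
Lemma BP_Rsum n d (F : nat -> R -> R) (e : nat -> R) :
  (forall k, (k < n)%nat -> BP d (e k) (F k)) -> BP d (Rsum n e) (fun x => Rsum n (fun k => F k x)).
Proof.
  induction n; intros H.
  - unfold BP. exists nil. repeat split; try constructor; try (intros; reflexivity).
  - eapply BP_ext; [|eapply BP_eqe; [|apply BP_plus; [apply IHn|apply H]]].
    + intros; simpl. rewrite Rsum_S; reflexivity.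
    + rewrite Rsum_S; reflexivity.
    + intros; apply H; lia.
    + lia.
Qed.
Lemma BP_x : BP 1 1 (fun x => x).
Proof.
  eapply BP_ext; [|eapply BP_eqe; [|apply (BP_plus 1 1 0 _ _ BP_1px (BP_up _ _ _ (BP_const (-1))))]].
  intros; simpl; ring. ring.
Qed.

Definition eJ (a b n : nat) : R :=
  Rsum (S n) (fun s => Binomial.C (n + a) (n - s) * Binomial.C (n + b) s * (/ 2) ^ n).

Lemma BP_jacobi a b n : BP n (eJ a b n) (jacobiP a b n).
Proof.
  unfold jacobiP, eJ. apply BP_Rsum. intros s Hs.
  assert (H1 : BP 1 (/2) (fun x => (x - 1) / 2)).
  { eapply BP_ext; [|eapply BP_eqe; [|apply (BP_plus 1 (/2 * 1) 0 _ _ (BP_scal _ (/2) _ _ BP_1px) (BP_up _ _ _ (BP_const (-1))))]].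
    intros; simpl; field. ring. }
  assert (H2 : BP 1 (/2) (fun x => (x + 1) / 2)).
  { eapply BP_ext; [|eapply BP_eqe; [|apply (BP_scal _ (/2) _ _ BP_1px)]]. intros; simpl; field. ring. }
  pose proof (BP_pow _ _ _ s H1) as P1. pose proof (BP_pow _ _ _ (n - s) H2) as P2.
  pose proof (BP_mult _ _ _ _ _ _ P1 P2) as P3.
  replace (1 * s + 1 * (n - s))%nat with n in P3 by lia.
  eapply BP_ext; [|eapply BP_eqe; [|apply (BP_scal _ (Binomial.C (n + a) (n - s) * Binomial.C (n + b) s) _ _ P3)]].
  - intros; simpl; ring.
  - rewrite <- pow_add. replace (s + (n - s))%nat with n by lia. ring.
Qed.

Lemma fact_ne0' n : INR (fact n) <> 0.
Proof. apply INR_fact_neq_0. Qed.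

Lemma C_n_0 n : Binomial.C n 0 = 1.
Proof. unfold Binomial.C. rewrite Nat.sub_0_r. simpl (fact 0). simpl INR. field. apply fact_ne0'. Qed.
Lemma C_n_n n : Binomial.C n n = 1.
Proof. unfold Binomial.C. rewrite Nat.sub_diag. simpl (fact 0). simpl INR. field. apply fact_ne0'. Qed.

Fixpoint ff (x : R) (k : nat) : R := match k with 0%nat => 1 | S k => ff x k * (x - INR k) end.
Definition Dn (n : nat) (g : nat -> R) : R := Rsum (S n) (fun s => (-1) ^ s * Binomial.C n s * g s).

Lemma Dn_ext n g h : (forall s, (s <= n)%nat -> g s = h s) -> Dn n g = Dn n h.
Proof. intros H. unfold Dn. apply Rsum_ext. intros. rewrite H by lia. reflexivity. Qed.
Lemma Dn_scal n c g : Dn n (fun s => c * g s) = c * Dn n g.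
Proof. unfold Dn. rewrite <- Rsum_scal. apply Rsum_ext; intros; ring. Qed.
Lemma Dn_minus n g h : Dn n (fun s => g s - h s) = Dn n g - Dn n h.
Proof.
  unfold Dn. replace (Rsum (S n) (fun s => (-1) ^ s * Binomial.C n s * g s) -
   Rsum (S n) (fun s => (-1) ^ s * Binomial.C n s * h s)) with
   (Rsum (S n) (fun s => (-1) ^ s * Binomial.C n s * g s) +
   Rsum (S n) (fun s => (-1) * ((-1) ^ s * Binomial.C n s * h s))).
  rewrite <- Rsum_plus. apply Rsum_ext; intros; ring. rewrite Rsum_scal. ring.
Qed.

Lemma Dn_S n g : Dn (S n) g = Dn n g - Dn n (fun s => g (S s)).
Proof.
  unfold Dn. rewrite (Rsum_shift (S n)). rewrite Rsum_S.
  rewrite (Rsum_shift n (fun s => (-1) ^ s * Binomial.C n s * g s)).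
  rewrite (Rsum_S n (fun s => (-1) ^ s * Binomial.C n s * g (S s))).
  rewrite !C_n_0, !C_n_n.
  assert (E : Rsum n (fun i => (-1) ^ S i * Binomial.C (S n) (S i) * g (S i)) =
    Rsum n (fun i => (-1) ^ S i * Binomial.C n (S i) * g (S i)) - Rsum n (fun s => (-1) ^ s * Binomial.C n s * g (S s))).
  { replace (Rsum n (fun i => (-1) ^ S i * Binomial.C n (S i) * g (S i)) - Rsum n (fun s => (-1) ^ s * Binomial.C n s * g (S s)))
      with (Rsum n (fun i => (-1) ^ S i * Binomial.C n (S i) * g (S i)) + Rsum n (fun s => (-1) * ((-1) ^ s * Binomial.C n s * g (S s))))
      by (rewrite Rsum_scal; ring).
    rewrite <- Rsum_plus. apply Rsum_ext. intros i Hi. rewrite <- Binomial.pascal by lia. simpl. ring. }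
  rewrite E. simpl pow. ring.
Qed.

Lemma ff_S' x k : ff x (S k) = x * ff (x - 1) k.
Proof.
  revert x. induction k; intros x. simpl. ring.
  change (ff x (S (S k))) with (ff x (S k) * (x - INR (S k))). rewrite IHk.
  change (ff (x - 1) (S k)) with (ff (x - 1) k * (x - 1 - INR k)). rewrite S_INR. ring.
Qed.

Lemma ff_diff y k : ff y (S k) - ff (y - 1) (S k) = INR (S k) * ff (y - 1) k.
Proof. rewrite ff_S'. change (ff (y - 1) (S k)) with (ff (y - 1) k * (y - 1 - INR k)). rewrite S_INR. ring. Qed.

Lemma Dn_ff_lt : forall n N k, (k < n)%nat -> Dn n (fun s => ff (N - INR s) k) = 0.
Proof.
  induction n; intros N k Hk; [lia|].
  rewrite Dn_S, <- Dn_minus. destruct k.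
  - unfold Dn. apply Rsum_zero. intros. simpl. ring.
  - rewrite (Dn_ext _ _ (fun s => INR (S k) * ff ((N - 1) - INR s) k)).
    + rewrite Dn_scal, IHn by lia. ring.
    + intros s Hs. rewrite S_INR with (n := s).
      replace (N - (INR s + 1)) with ((N - INR s) - 1) by ring. rewrite ff_diff. f_equal. f_equal. ring.
Qed.

Lemma Dn_ff_eq : forall n N, Dn n (fun s => ff (N - INR s) n) = INR (fact n).
Proof.
  induction n; intros N.
  - unfold Dn. rewrite Rsum_S, Rsum_0. simpl. rewrite C_n_0. ring.
  - rewrite Dn_S, <- Dn_minus.
    rewrite (Dn_ext _ _ (fun s => INR (S n) * ff ((N - 1) - INR s) n)).
    + rewrite Dn_scal, IHn. change (fact (S n)) with (S n * fact n)%nat. rewrite mult_INR. ring.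
    + intros s Hs. rewrite S_INR with (n := s).
      replace (N - (INR s + 1)) with ((N - INR s) - 1) by ring. rewrite ff_diff. f_equal. f_equal. ring.
Qed.

Lemma ff_fact m k : INR (fact (m + k)) = INR (fact m) * ff (INR (m + k)) k.
Proof.
  revert m. induction k; intros m.
  - rewrite Nat.add_0_r. simpl. ring.
  - rewrite ff_S'. replace (m + S k)%nat with (S (m + k)) by lia.
    change (fact (S (m + k))) with (S (m + k) * fact (m + k))%nat. rewrite mult_INR, IHk.
    replace (INR (S (m + k)) - 1) with (INR (m + k)) by (rewrite S_INR; ring). ring.
Qed.

Definition wJ (a b : nat) (x : R) : R := (1 - x) ^ a * (1 + x) ^ b.
Definition Kval (a b n k : nat) : R :=
  2 ^ (a + b + n + k + 1) / 2 ^ n * INR (fact (n + a)) * INR (fact (n + b)) /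
  (INR (fact n) * INR (fact (a + b + n + k + 1))).
Definition Vj (a b n k : nat) : R := Kval a b n k * Dn n (fun s => ff (INR (b + n + k) - INR s) k).

Lemma jac_term a b n k s x : (s <= n)%nat ->
  wJ a b x * (Binomial.C (n + a) (n - s) * Binomial.C (n + b) s * ((x - 1) / 2) ^ s * ((x + 1) / 2) ^ (n - s)) * (1 + x) ^ k
  = (Binomial.C (n + a) (n - s) * Binomial.C (n + b) s * (-1) ^ s / 2 ^ n) * ((x - -1) ^ (b + (n - s) + k) * (1 - x) ^ (a + s)).
Proof.
  intros Hs. unfold wJ.
  replace ((x - 1) / 2) with ((-1) * (1 - x) * / 2) by field.
  replace ((x + 1) / 2) with ((1 + x) * / 2) by field.
  replace (x - -1) with (1 + x) by ring.
  rewrite !Rpow_mult_distr, !pow_add.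
  replace (2 ^ n) with (2 ^ s * 2 ^ (n - s)) by (rewrite <- pow_add; f_equal; lia).
  rewrite !pow_inv. field. split; apply pow_nonzero; lra.
Qed.

Lemma jac_val a b n k s : (s <= n)%nat ->
  Binomial.C (n + a) (n - s) * Binomial.C (n + b) s * (-1) ^ s / 2 ^ n * betaV (1 - -1) (b + (n - s) + k) (a + s)
  = Kval a b n k * ((-1) ^ s * Binomial.C n s * ff (INR (b + n + k) - INR s) k).
Proof.
  intros Hs. unfold Binomial.C, betaV, Kval.
  replace (1 - -1) with 2 by ring.
  replace (b + (n - s) + k + (a + s) + 1)%nat with (a + b + n + k + 1)%nat by lia.
  replace (n + a - (n - s))%nat with (a + s)%nat by lia.
  replace (n + b - s)%nat with (b + (n - s))%nat by lia.
  rewrite (ff_fact (b + (n - s)) k).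
  replace (INR (b + (n - s) + k)) with (INR (b + n + k) - INR s)
    by (rewrite !plus_INR, minus_INR by lia; ring).
  pose proof (fact_ne0' (n - s)). pose proof (fact_ne0' s). pose proof (fact_ne0' (a + s)).
  pose proof (fact_ne0' (b + (n - s))). pose proof (fact_ne0' n). pose proof (fact_ne0' (a + b + n + k + 1)).
  field. repeat split; auto; apply pow_nonzero; lra.
Qed.

Lemma Rsum_sandwich n c d F : c * Rsum n F * d = Rsum n (fun s => c * F s * d).
Proof. induction n. rewrite !Rsum_0; ring. rewrite !Rsum_S, <- IHn. ring. Qed.

Lemma jac_int_mon a b n k :
  is_RInt (fun x => wJ a b x * jacobiP a b n x * (1 + x) ^ k) (-1) 1 (Vj a b n k).
Proof.
  apply is_RInt_ext' with (f := fun x => Rsum (S n) (fun s =>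
     (Binomial.C (n + a) (n - s) * Binomial.C (n + b) s * (-1) ^ s / 2 ^ n) * ((x - -1) ^ (b + (n - s) + k) * (1 - x) ^ (a + s)))).
  { intros x _. unfold jacobiP. rewrite Rsum_sandwich.
    apply Rsum_ext. intros s Hs. rewrite <- jac_term by lia. reflexivity. }
  unfold Vj, Dn. rewrite <- Rsum_scal.
  apply is_RInt_Rsum. intros s Hs.
  rewrite <- jac_val by lia. apply is_RInt_scal'. apply is_RInt_beta.
Qed.

Lemma Vj_lt a b n k : (k < n)%nat -> Vj a b n k = 0.
Proof. intros. unfold Vj. rewrite Dn_ff_lt by auto. ring. Qed.

Lemma Vj_eq_pos a b n : 0 < Vj a b n n.
Proof.
  unfold Vj, Kval. rewrite Dn_ff_eq.
  pose proof (INR_fact_lt_0 n). pose proof (INR_fact_lt_0 (n + a)). pose proof (INR_fact_lt_0 (n + b)).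
  pose proof (INR_fact_lt_0 (a + b + n + n + 1)).
  assert (0 < 2 ^ (a + b + n + n + 1)) by (apply pow_lt; lra).
  assert (0 < 2 ^ n) by (apply pow_lt; lra).
  apply Rmult_lt_0_compat; auto.
  unfold Rdiv. repeat apply Rmult_lt_0_compat; auto; apply Rinv_0_lt_compat; auto.
  apply Rmult_lt_0_compat; auto.
Qed.

Lemma jac_int_list a b n l :
  is_RInt (fun x => wJ a b x * jacobiP a b n x * evalB l x) (-1) 1
    (fold_right (fun (t : bmon) acc => let '(c, k) := t in c * Vj a b n k + acc) 0 l).
Proof.
  induction l as [|[c k] l IH]; unfold evalB in *; cbn [fold_right] in *.
  - eapply is_RInt_ext'; [|apply (is_RInt_eqv (fun _ => 0) _ _ (scal (1 - -1) 0) 0); [|apply (is_RInt_const (-1) 1 0)]].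
    + intros; simpl; ring.
    + cbn. unfold scal; simpl. unfold mult; simpl. ring.
  - apply is_RInt_ext' with (f := fun x => c * (wJ a b x * jacobiP a b n x * (1 + x) ^ k) +
        wJ a b x * jacobiP a b n x * fold_right (fun (t : bmon) acc => let '(c, k) := t in c * (1 + x) ^ k + acc) 0 l).
    { intros; ring. }
    apply is_RInt_plus'; auto. apply is_RInt_scal'. apply jac_int_mon.
Qed.

Lemma fold_Vj_low a b n d l : degB d l -> (d < n)%nat ->
  fold_right (fun (t : bmon) acc => let '(c, k) := t in c * Vj a b n k + acc) 0 l = 0.
Proof.
  intros H Hd. induction l as [|[c k] l IH]; simpl; auto.
  inversion H; subst. simpl in *. rewrite IH, Vj_lt by (auto; lia). ring.
Qed.

Lemma fold_Vj_top a b n l : degB n l ->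
  fold_right (fun (t : bmon) acc => let '(c, k) := t in c * Vj a b n k + acc) 0 l = lcB n l * Vj a b n n.
Proof.
  intros H. induction l as [|[c k] l IH]; simpl; [ring|].
  inversion H; subst. simpl in *. rewrite IH by auto.
  destruct (Nat.eqb_spec k n). subst; ring. rewrite Vj_lt by lia. ring.
Qed.

Lemma jac_orth a b n d e q : BP d e q -> (d < n)%nat ->
  is_RInt (fun x => wJ a b x * jacobiP a b n x * q x) (-1) 1 0.
Proof.
  intros [l [H1 [H2 H3]]] Hd. eapply is_RInt_ext'; [|eapply is_RInt_eqv; [|apply (jac_int_list a b n l)]].
  - intros. rewrite H3. reflexivity.
  - eapply fold_Vj_low; eauto.
Qed.

Lemma jac_top a b n e q : BP n e q ->
  is_RInt (fun x => wJ a b x * jacobiP a b n x * q x) (-1) 1 (e * Vj a b n n).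
Proof.
  intros [l [H1 [H2 H3]]]. eapply is_RInt_ext'; [|eapply is_RInt_eqv; [|apply (jac_int_list a b n l)]].
  - intros. rewrite H3. reflexivity.
  - rewrite fold_Vj_top; auto. congruence.
Qed.

Lemma jacobi_orth a b n m : n <> m ->
  is_RInt (fun x => wJ a b x * jacobiP a b n x * jacobiP a b m x) (-1) 1 0.
Proof.
  intros H. destruct (Nat.lt_ge_cases m n).
  - eapply jac_orth; [apply (BP_jacobi a b m)|]; auto.
  - eapply is_RInt_ext'; [|eapply (jac_orth a b m n); [apply (BP_jacobi a b n)|lia]].
    intros; simpl; ring.
Qed.

Lemma eJ_pos a b n : 0 < eJ a b n.
Proof.
  unfold eJ. rewrite Rsum_shift. rewrite C_n_0.
  assert (0 <= Rsum n (fun i => Binomial.C (n + a) (n - S i) * Binomial.C (n + b) (S i) * (/ 2) ^ n)).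
  { apply Rsum_nonneg. intros. unfold Binomial.C.
    repeat apply Rmult_le_pos; try (apply Rlt_le, Rinv_0_lt_compat); try apply pos_INR;
    try (apply Rmult_lt_0_compat; apply INR_fact_lt_0); try (apply pow_le; lra). }
  assert (0 < Binomial.C (n + a) (n - 0) * 1 * (/ 2) ^ n).
  { unfold Binomial.C. rewrite Rmult_1_r. apply Rmult_lt_0_compat.
    unfold Rdiv. apply Rmult_lt_0_compat. apply INR_fact_lt_0. apply Rinv_0_lt_compat, Rmult_lt_0_compat; apply INR_fact_lt_0.
    apply pow_lt; lra. }
  lra.
Qed.

Definition hJ (a b n : nat) : R := eJ a b n * Vj a b n n.

Lemma hJ_pos a b n : 0 < hJ a b n.
Proof. unfold hJ. apply Rmult_lt_0_compat. apply eJ_pos. apply Vj_eq_pos. Qed.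

Lemma jacobi_norm a b n :
  is_RInt (fun x => wJ a b x * jacobiP a b n x * jacobiP a b n x) (-1) 1 (hJ a b n).
Proof. apply jac_top. apply BP_jacobi. Qed.

Fixpoint Bn (n k : nat) : R :=
  match n, k with
  | _, 0%nat => 1
  | 0%nat, S _ => 0
  | S n', S k' => Bn n' k' + Bn n' k
  end.

Lemma Bn_0 n : Bn n 0 = 1.
Proof. destruct n; reflexivity. Qed.

Lemma Bn_big n k : (n < k)%nat -> Bn n k = 0.
Proof.
  revert k. induction n; intros k Hk; destruct k; try lia; simpl; auto.
  rewrite !IHn by lia. ring.
Qed.

Lemma Bn_C n k : (k <= n)%nat -> Bn n k = Binomial.C n k.
Proof.
  revert k. induction n; intros k Hk.
  - destruct k; [|lia]. simpl. rewrite C_n_0. reflexivity.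
  - destruct k. { simpl. rewrite C_n_0. reflexivity. }
    simpl. destruct (Nat.eq_dec k n).
    + subst k. rewrite (Bn_big n (S n)) by lia. rewrite IHn by lia. rewrite !C_n_n. ring.
    + rewrite !IHn by lia. apply Binomial.pascal. lia.
Qed.

Lemma vandermonde p q k : Rsum (S k) (fun s => Bn p s * Bn q (k - s)) = Bn (p + q) k.
Proof.
  revert q k. induction p; intros q k.
  - rewrite Rsum_shift. rewrite Rsum_zero. rewrite Nat.sub_0_r, Nat.add_0_l, Bn_0. ring.
    intros; simpl (Bn 0 (S i)); ring.
  - destruct k.
    + rewrite Rsum_S, Rsum_0. simpl (0 - 0)%nat. rewrite !Bn_0. ring.
    + rewrite Rsum_shift. rewrite Bn_0. simpl (S k - 0)%nat.
      replace (Rsum (S k) (fun i => Bn (S p) (S i) * Bn q (S k - S i)))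
        with (Rsum (S k) (fun i => Bn p i * Bn q (k - i)) + Rsum (S k) (fun i => Bn p (S i) * Bn q (k - i))).
      2: { rewrite <- Rsum_plus. apply Rsum_ext. intros. simpl. ring. }
      rewrite IHp.
      assert (E : Bn q (S k) + Rsum (S k) (fun i => Bn p (S i) * Bn q (k - i)) = Bn (p + q) (S k)).
      { rewrite <- (IHp q (S k)). rewrite (Rsum_shift (S k)). rewrite Bn_0. simpl (S k - 0)%nat.
        f_equal. ring. }
      replace (S p + q)%nat with (S (p + q)) by lia. simpl (Bn (S (p + q)) (S k)). rewrite <- E. ring.
Qed.

Lemma sum_C_sq m : Rsum (S m) (fun s => Binomial.C (m + 0) (m - s) * Binomial.C (m + 0) s) = Binomial.C (m + m) m.
Proof.
  rewrite Nat.add_0_r. rewrite <- Bn_C by lia. rewrite <- vandermonde.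
  apply Rsum_ext. intros s Hs. rewrite !Bn_C by lia. ring.
Qed.

Lemma hJ_legendre m : hJ 0 0 m = 2 / (2 * INR m + 1).
Proof.
  unfold hJ, eJ, Vj, Kval. rewrite Dn_ff_eq.
  replace (Rsum (S m) (fun s => Binomial.C (m + 0) (m - s) * Binomial.C (m + 0) s * (/ 2) ^ m))
    with (Rsum (S m) (fun s => Binomial.C (m + 0) (m - s) * Binomial.C (m + 0) s) * (/2) ^ m).
  2: { rewrite Rmult_comm, <- Rsum_scal. apply Rsum_ext; intros; ring. }
  rewrite sum_C_sq. unfold Binomial.C. rewrite !Nat.add_0_r. replace (m + m - m)%nat with m by lia.
  replace (0 + m + m + 1)%nat with (S (m + m)) by lia.
  change (fact (S (m + m))) with (S (m + m) * fact (m + m))%nat. rewrite mult_INR.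
  rewrite S_INR, plus_INR.
  replace (2 ^ S (m + m)) with (2 * 2 ^ m * 2 ^ m) by (simpl; rewrite pow_add; ring).
  pose proof (fact_ne0' m). pose proof (fact_ne0' (m + m)). pose proof (pos_INR m).
  rewrite pow_inv. field. repeat split; try lra. apply pow_nonzero; lra.
Qed.

Lemma hJ_legendre_le m : hJ 0 0 m <= 2.
Proof.
  rewrite hJ_legendre. pose proof (pos_INR m).
  apply Rmult_le_reg_r with (2 * INR m + 1); [lra|]. unfold Rdiv. rewrite Rmult_assoc, Rinv_l by lra. nra.
Qed.

Lemma evalB_cont l x : continuous (evalB l) x.
Proof.
  induction l as [|[c k] l IH].
  - apply continuous_const.
  - apply (continuous_plus (fun x => c * (1 + x) ^ k) (evalB l)); auto.
    apply (ex_derive_continuous (fun x => c * (1 + x) ^ k)). auto_derive. auto.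
Qed.

Lemma BP_cont d e f x : BP d e f -> continuous f x.
Proof.
  intros [l [_ [_ H]]]. eapply continuous_ext; [|apply (evalB_cont l)]. intros; rewrite H; auto.
Qed.

Lemma cont_ex_RInt (f : R -> R) a b : (forall x, continuous f x) -> ex_RInt f a b.
Proof. intros. apply (ex_RInt_continuous f). intros; auto. Qed.

Lemma cont_mult (f g : R -> R) x : continuous f x -> continuous g x -> continuous (fun y => f y * g y) x.
Proof. intros. apply (continuous_mult f g); auto. Qed.

Lemma cont_sq (f : R -> R) x : continuous f x -> continuous (fun t => f t ^ 2) x.
Proof.
  intros H. apply (continuous_ext (fun t => f t * f t)).
  intros t. simpl. rewrite Rmult_1_r. reflexivity. apply cont_mult; auto.
Qed.

Lemma cauchy_schwarz (f : R -> R) a b : a < b -> (forall x, continuous f x) ->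
  (RInt f a b) ^ 2 <= (b - a) * RInt (fun t => f t ^ 2) a b.
Proof.
  intros Hab Hc.
  assert (H1 : is_RInt f a b (RInt f a b)) by (apply (RInt_correct f); apply cont_ex_RInt; auto).
  assert (H2 : is_RInt (fun t => f t ^ 2) a b (RInt (fun t => f t ^ 2) a b)).
  { apply (RInt_correct (fun t => f t ^ 2)), cont_ex_RInt. intros. apply cont_sq; auto. }
  revert H1 H2. generalize (RInt f a b : R) (RInt (fun t => f t ^ 2) a b : R). intros A B H1 H2.
  set (c := A / (b - a)).
  assert (H3 : is_RInt (fun t => (f t - c) ^ 2) a b (B + (-2 * c) * A + c ^ 2 * (b - a))).
  { eapply is_RInt_ext'; [|apply is_RInt_plus'; [apply is_RInt_plus'; [apply H2|apply is_RInt_scal'; apply H1]|]].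
    2: { eapply is_RInt_eqv; [|apply (is_RInt_const a b (c ^ 2))]. cbn. unfold scal; simpl. unfold mult; simpl. ring. }
    intros; simpl; ring. }
  assert (H4 : 0 <= B + (-2 * c) * A + c ^ 2 * (b - a)).
  { rewrite <- (is_RInt_unique _ _ _ _ H3). apply RInt_ge_0; [lra| eexists; eauto |]. intros; apply pow2_ge_0. }
  unfold c in H4. apply Rmult_le_reg_r with (/ (b - a)). apply Rinv_0_lt_compat; lra.
  replace ((b - a) * B * / (b - a)) with B by (field; lra).
  replace (A / (b - a)) with (A * / (b - a)) in H4 by reflexivity.
  assert (0 < / (b - a)) by (apply Rinv_0_lt_compat; lra).
  replace (B + -2 * (A * / (b - a)) * A + (A * / (b - a)) ^ 2 * (b - a)) with
    (B - A ^ 2 * / (b - a)) in H4 by (field; lra). lra.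
Qed.

Definition IntB (l : list bmon) (k : nat) : R :=
  fold_right (fun (t : bmon) acc => let '(c, j) := t in c * (2 ^ (S (j + k)) / INR (S (j + k))) + acc) 0 l.

Lemma IntB_is l k : is_RInt (fun x => evalB l x * (1 + x) ^ k) (-1) 1 (IntB l k).
Proof.
  induction l as [|[c j] l IH]; unfold evalB in *; cbn [fold_right IntB] in *.
  - eapply is_RInt_ext'; [|apply (is_RInt_eqv (fun _ => 0) _ _ (scal (1 - -1) 0) 0); [|apply (is_RInt_const (-1) 1 0)]].
    + intros; simpl; ring.
    + cbn. unfold scal; simpl. unfold mult; simpl. ring.
  - apply is_RInt_ext' with (f := fun x => c * (x - -1) ^ (j + k) +
        fold_right (fun (t : bmon) acc => let '(c, k) := t in c * (1 + x) ^ k + acc) 0 l * (1 + x) ^ k).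
    { intros. rewrite pow_add. replace (x - -1) with (1 + x) by ring. ring. }
    apply is_RInt_plus'; auto. apply is_RInt_scal'.
    eapply is_RInt_eqv; [|apply is_RInt_mono_shift]. f_equal. f_equal. ring.
Qed.

Lemma is_RInt_uniq (f : R -> R) a b (v w : R) : is_RInt f a b v -> is_RInt f a b w -> v = w.
Proof. intros H1 H2. rewrite <- (is_RInt_unique _ _ _ _ H1). apply is_RInt_unique; auto. Qed.

Definition LLst (l : list bmon) : list bmon := map (fun t : bmon => let '(c, j) := t in (c / INR (S j), S j)) l.

Lemma LLst_eval l z : is_RInt (evalB l) (-1) z (evalB (LLst l) z).
Proof.
  induction l as [|[c j] l IH]; unfold evalB in *; cbn [fold_right LLst map] in *.
  - eapply is_RInt_ext'; [|apply (is_RInt_eqv (fun _ => 0) _ _ (scal (z - -1) 0) 0); [|apply (is_RInt_const (-1) z 0)]].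
    + intros; simpl; ring.
    + cbn. unfold scal; simpl. unfold mult; simpl. ring.
  - apply is_RInt_plus'; auto.
    apply is_RInt_ext' with (f := fun x => c * (x - -1) ^ j).
    { intros. replace (x - -1) with (1 + x) by ring. ring. }
    eapply is_RInt_eqv; [|apply is_RInt_scal'; apply is_RInt_mono_shift].
    replace (z - -1) with (1 + z) by ring. unfold Rdiv. ring.
Qed.

Lemma IntB_cons c j l k : IntB ((c, j) :: l) k = c * (2 ^ (S (j + k)) / INR (S (j + k))) + IntB l k.
Proof. reflexivity. Qed.
Lemma LLst_cons c j l : LLst ((c, j) :: l) = (c / INR (S j), S j) :: LLst l.
Proof. reflexivity. Qed.

Lemma IntB_LLst l k : INR (S k) * IntB (LLst l) k = 2 ^ (S k) * IntB l 0 - IntB l (S k).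
Proof.
  induction l as [|[c j] l IH]. { simpl. ring. }
  rewrite LLst_cons, !IntB_cons, Rmult_plus_distr_l, IH.
  replace (S (S j + k)) with (S (j + S k)) by lia. replace (j + 0)%nat with j by lia.
  replace (2 ^ S (j + S k)) with (2 ^ S k * 2 ^ S j) by (rewrite <- pow_add; f_equal; lia).
  rewrite !S_INR, !plus_INR, !S_INR. pose proof (pos_INR j). pose proof (pos_INR k).
  field. lra.
Qed.

Lemma degB_LLst d l : degB d l -> degB (S d) (LLst l).
Proof.
  intros H. induction l as [|[c j] l IH]; [constructor|]. inversion H; subst.
  rewrite LLst_cons. constructor; simpl in *; [lia|apply IH; exact H3].
Qed.

Lemma legendre_list n : exists l, degB n l /\ forall x, legendre n x = evalB l x.
Proof. destruct (BP_jacobi 0 0 n) as [l [H1 [_ H3]]]. exists l. split; auto. Qed.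

Lemma IntB_leg_zero n l k : degB n l -> (forall x, legendre n x = evalB l x) -> (k < n)%nat -> IntB l k = 0.
Proof.
  intros Hd He Hk. apply (is_RInt_uniq (fun x => evalB l x * (1 + x) ^ k) (-1) 1); [apply IntB_is|].
  eapply is_RInt_ext'; [|apply (jac_orth 0 0 n k 1 (fun x => (1 + x) ^ k)); auto].
  - intros. unfold wJ, legendre in *. rewrite He. simpl. ring.
  - pose proof (BP_pow _ _ _ k BP_1px) as HB. replace (1 * k)%nat with k in HB by lia.
    rewrite pow1 in HB. exact HB.
Qed.

Lemma fold_IntB (lA lB : list bmon) :
  is_RInt (fun x => evalB lA x * evalB lB x) (-1) 1
    (fold_right (fun (t : bmon) acc => let '(c, k) := t in c * IntB lA k + acc) 0 lB).
Proof.
  induction lB as [|[c k] l IH]; cbn [fold_right evalB] in *.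
  - eapply is_RInt_ext'; [|apply (is_RInt_eqv (fun _ => 0) _ _ (scal (1 - -1) 0) 0); [|apply (is_RInt_const (-1) 1 0)]].
    + intros; unfold evalB; simpl; ring.
    + cbn. unfold scal; simpl. unfold mult; simpl. ring.
  - apply is_RInt_ext' with (f := fun x => c * (evalB lA x * (1 + x) ^ k) + evalB lA x * evalB l x).
    { intros. unfold evalB at 3. cbn [fold_right]. fold (evalB l x). ring. }
    apply is_RInt_plus'; auto. apply is_RInt_scal'. apply IntB_is.
Qed.

Lemma intLeg_list n : (1 <= n)%nat -> exists lL l, degB n lL /\ degB (n - 1) l /\
  (forall x, legendre (n - 1) x = evalB l x) /\ lL = LLst l /\ forall z, intLegendre n z = evalB lL z.
Proof.
  intros Hn. destruct (legendre_list (n - 1)) as [l [Hd He]]. exists (LLst l), l.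
  repeat split; auto.
  - replace n with (S (n - 1)) at 1 by lia. apply degB_LLst; auto.
  - intros z. unfold intLegendre. rewrite (RInt_ext _ (evalB l)).
    apply is_RInt_unique, LLst_eval. intros; auto.
Qed.

Lemma intLeg_BP n : (1 <= n)%nat -> exists e, BP n e (intLegendre n).
Proof.
  intros Hn. destruct (intLeg_list n Hn) as [lL [l [H1 [_ [_ [_ H5]]]]]].
  exists (lcB n lL), lL. repeat split; auto.
Qed.

Lemma intLeg_orth n m : (1 <= m)%nat -> (m + 3 <= n)%nat ->
  is_RInt (fun x => intLegendre n x * intLegendre m x) (-1) 1 0.
Proof.
  intros Hm Hn.
  destruct (intLeg_list n) as [lL [l [H1 [H2 [H3 [H4 H5]]]]]]; [lia|].
  destruct (intLeg_list m) as [lM [l' [H1' [_ [_ [_ H5']]]]]]; [lia|].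
  eapply is_RInt_ext'; [|eapply is_RInt_eqv; [|apply (fold_IntB lL lM)]].
  { intros. rewrite H5, H5'. auto. }
  clear H5'. induction lM as [|[c k] lM IH]; simpl; auto.
  inversion H1'; subst. simpl in *. rewrite IH by auto.
  assert (IntB (LLst l) k = 0).
  { apply Rmult_eq_reg_l with (INR (S k)); [|apply not_0_INR; lia]. rewrite IntB_LLst.
    rewrite (IntB_leg_zero (n - 1) l 0), (IntB_leg_zero (n - 1) l (S k)); auto; try lia. ring. }
  rewrite H. ring.
Qed.

Lemma intLeg_cont n x : (1 <= n)%nat -> continuous (intLegendre n) x.
Proof. intros Hn. destruct (intLeg_BP n Hn) as [e He]. eapply BP_cont; eauto. Qed.

Lemma RInt_Chasles_R (f : R -> R) a b c : ex_RInt f a b -> ex_RInt f b c ->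
  RInt f a b + RInt f b c = RInt f a c.
Proof. intros. apply (RInt_Chasles f); auto. Qed.

Lemma intLeg_sq_le n : (2 <= n)%nat -> RInt (fun x => intLegendre n x ^ 2) (-1) 1 <= 8.
Proof.
  intros Hn. set (h := (RInt (fun x => legendre (n - 1) x ^ 2) (-1) 1 : R)).
  assert (Hh : h <= 2).
  { assert (HN : is_RInt (fun x => legendre (n - 1) x ^ 2) (-1) 1 (hJ 0 0 (n - 1))).
    { eapply is_RInt_ext'; [|apply jacobi_norm]. intros. unfold wJ, legendre. rewrite !pow_O. ring. }
    unfold h. rewrite (is_RInt_unique _ _ _ _ HN). apply hJ_legendre_le. }
  destruct (legendre_list (n - 1)) as [l [Hd He]].
  assert (Hc : forall x, continuous (legendre (n - 1)) x).
  { intros. eapply continuous_ext; [|apply (evalB_cont l)]. intros; rewrite He; auto. }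
  assert (Hc2 : forall x, continuous (fun t => legendre (n - 1) t ^ 2) x).
  { intros. apply cont_sq; auto. }
  assert (Hpt : forall x, -1 < x < 1 -> intLegendre n x ^ 2 <= 4).
  { intros x Hx. unfold intLegendre. eapply Rle_trans; [apply cauchy_schwarz; auto; lra|].
    assert (RInt (fun t => legendre (n - 1) t ^ 2) (-1) x <= h).
    { unfold h. rewrite <- (RInt_Chasles_R _ (-1) x 1) by (apply cont_ex_RInt; auto).
      assert (0 <= RInt (fun t => legendre (n - 1) t ^ 2) x 1).
      { apply RInt_ge_0; [lra|apply cont_ex_RInt; auto|]. intros; apply pow2_ge_0. }
      lra. }
    assert (0 <= RInt (fun t => legendre (n - 1) t ^ 2) (-1) x).
    { apply RInt_ge_0; [lra|apply cont_ex_RInt; auto|]. intros; apply pow2_ge_0. }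
    nra. }
  eapply Rle_trans. apply (RInt_le _ (fun _ => 4)); [lra| | |apply Hpt].
  - apply cont_ex_RInt. intros. apply cont_sq. apply intLeg_cont; lia.
  - apply cont_ex_RInt. intros; apply continuous_const.
  - rewrite RInt_const. unfold scal; simpl. unfold mult; simpl. lra.
Qed.

Lemma Poly2_compB d e f (g : R -> R -> R) : BP d e f -> Poly2 g -> Poly2 (fun x y => f (g x y)).
Proof.
  intros [l [_ [_ Hl]]] Hg. apply Poly2_ext with (f := fun x y => evalB l (g x y)). { intros. rewrite Hl. reflexivity. }
  clear Hl. induction l as [|[c k] l IH].
  - eapply Poly2_ext; [|apply (Poly2_const 0)]. intros; reflexivity.
  - unfold evalB; cbn [fold_right]. fold (evalB l).
    apply Poly2_plus; auto. apply Poly2_mult. apply Poly2_const. apply Poly2_pow. poly2. auto.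
Qed.

Lemma Poly2_homog d e f (S T : R -> R -> R) : BP d e f -> Poly2 S -> Poly2 T ->
  (forall x y, inside x y -> T x y <> 0) -> Poly2 (fun x y => T x y ^ d * f (S x y / T x y)).
Proof.
  intros [l [Hd [_ Hl]]] HS HT HT0.
  apply Poly2_ext with (f := fun x y => fold_right (fun (t : bmon) acc => let '(c, k) := t in
     c * (T x y + S x y) ^ k * T x y ^ (d - k) + acc) 0 l).
  { intros x y Hxy. rewrite Hl. specialize (HT0 x y Hxy). clear Hl. induction l as [|[c k] l IH].
    - simpl. ring.
    - inversion Hd; subst. simpl in *. rewrite IH by auto. rewrite Rmult_plus_distr_l. f_equal.
      replace (T x y ^ d) with (T x y ^ k * T x y ^ (d - k)) by (rewrite <- pow_add; f_equal; lia).
      replace (T x y + S x y) with (T x y * (1 + S x y / T x y)) by (field; auto).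
      rewrite Rpow_mult_distr. ring. }
  clear Hl. induction l as [|[c k] l IH].
  - eapply Poly2_ext; [|apply (Poly2_const 0)]. intros; reflexivity.
  - inversion Hd; subst. cbn [fold_right].
    apply Poly2_plus; [|apply IH; auto]. poly2; auto.
Qed.

Lemma Poly2_lam i : Poly2 (lam i).
Proof.
  destruct i as [|[|[|[|i]]]].
  - eapply Poly2_ext; [|apply (Poly2_const 0)]. intros; reflexivity.
  - eapply Poly2_ext; [|apply (Poly2_minus (fun x y => 1 - x) (fun _ y => y)); [apply (Poly2_minus (fun _ _ => 1) (fun x _ => x)); poly2|poly2]].
    intros; reflexivity.
  - eapply Poly2_ext; [|apply Poly2_x]. intros; reflexivity.
  - eapply Poly2_ext; [|apply Poly2_y]. intros; reflexivity.
  - eapply Poly2_ext; [|apply (Poly2_const 0)]. intros; reflexivity.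
Qed.

Lemma lam_sum_pos m x y : inside x y -> 0 < lam (edge1 m) x y + lam (edge2 m) x y.
Proof.
  intros [H1 [H2 H3]]. destruct m as [|[|[|[|m]]]]; simpl; lra.
Qed.

Lemma Poly2_phiE m i : Poly2 (phiE m i).
Proof.
  unfold phiE. apply Poly2_mult. apply Poly2_const. unfold intLegendreS.
  destruct (intLeg_BP (i + 2)) as [e He]; [lia|].
  apply (Poly2_homog _ _ _ (fun x y => lam (edge2 m) x y - lam (edge1 m) x y) (fun x y => lam (edge1 m) x y + lam (edge2 m) x y) He).
  - apply Poly2_minus; apply Poly2_lam.
  - apply Poly2_plus; apply Poly2_lam.
  - intros. pose proof (lam_sum_pos m x y H). lra.
Qed.

Lemma Poly2_phiI0 i j : Poly2 (phiI0 i j).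
Proof.
  unfold phiI0. apply Poly2_mult; [apply Poly2_mult; [apply Poly2_mult; [apply Poly2_mult; apply Poly2_lam|apply Poly2_lam]|]|].
  - unfold jacobiPS.
    apply (Poly2_homog _ _ _ (fun x y => lam 1 x y - lam 2 x y) (fun x y => lam 1 x y + lam 2 x y) (BP_jacobi 2 2 i)).
    + apply Poly2_minus; apply Poly2_lam.
    + apply Poly2_plus; apply Poly2_lam.
    + intros. pose proof (lam_sum_pos 1 x y H). simpl in *. lra.
  - apply (Poly2_compB _ _ _ _ (BP_jacobi (2 * i + 5) 2 j)).
    apply Poly2_minus; [apply Poly2_mult; [apply Poly2_const|apply Poly2_lam]|apply Poly2_const].
Qed.

Lemma Poly2_phiI i j : Poly2 (phiI i j).
Proof. unfold phiI. apply Poly2_mult. apply Poly2_const. apply Poly2_phiI0. Qed.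

Lemma Poly2_uV aV : Poly2 (uV aV).
Proof.
  unfold uV. apply (Poly2_Rsum 3 (fun k x y => aV (S k) * phiV (S k) x y)). intros.
  apply Poly2_mult. apply Poly2_const. unfold phiV. apply Poly2_lam.
Qed.

Lemma Poly2_uE p m a : Poly2 (uE p m a).
Proof.
  unfold uE. apply (Poly2_Rsum _ (fun j x y => a j * phiE m j x y)). intros.
  apply Poly2_mult. apply Poly2_const. apply Poly2_phiE.
Qed.

Lemma Poly2_uI p a : Poly2 (uI p a).
Proof.
  unfold uI. apply (Poly2_Rsum _ (fun i x y => Rsum p (fun j => if (i + j + 3 <=? p)%nat then a i j * phiI i j x y else 0))).
  intros. apply (Poly2_Rsum _ (fun j x y => if (k + j + 3 <=? p)%nat then a k j * phiI k j x y else 0)). intros.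
  destruct (k + k0 + 3 <=? p)%nat. apply Poly2_mult. apply Poly2_const. apply Poly2_phiI. apply Poly2_const.
Qed.

Lemma Poly2_polydeg p u : is_poly_deg p u -> Poly2 u.
Proof.
  intros [c Hc]. eapply Poly2_ext with (f := fun x y => Rsum (S p) (fun i => Rsum (S p) (fun j =>
      if (i + j <=? p)%nat then c i j * x ^ i * y ^ j else 0))). { intros. rewrite Hc. reflexivity. }
  apply (Poly2_Rsum _ (fun i x y => Rsum (S p) (fun j => if (i + j <=? p)%nat then c i j * x ^ i * y ^ j else 0))).
  intros. apply (Poly2_Rsum _ (fun j x y => if (k + j <=? p)%nat then c k j * x ^ k * y ^ j else 0)). intros.
  destruct (k + k0 <=? p)%nat; poly2.
Qed.

Lemma sub_minus (g : R -> R) T Q : 0 < T ->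
  is_RInt (fun s => g (T * (1 - s) / 2)) (-1) 1 Q -> is_RInt g 0 T (T / 2 * Q).
Proof.
  intros HT H. set (h := fun s => g (T * (1 - s) / 2)) in *.
  assert (Hs : is_RInt h (-2 / T * 0 + 1) (-2 / T * T + 1) (- Q)).
  { replace (-2 / T * 0 + 1) with 1 by (field; lra). replace (-2 / T * T + 1) with (-1) by (field; lra).
    apply (is_RInt_swap h). exact H. }
  pose proof (is_RInt_comp_lin h (-2 / T) 1 0 T (- Q) Hs) as K.
  apply (is_RInt_scal _ _ _ (- T / 2)) in K.
  eapply is_RInt_ext'; [|eapply is_RInt_eqv; [|exact K]].
  - intros x Hx. unfold h, scal; simpl. unfold mult; simpl.
    replace (T * (1 - (-2 / T * x + 1)) / 2) with x by (field; lra). field; lra.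
  - unfold scal; simpl. unfold mult; simpl. field; lra.
Qed.

Lemma sub_plus (g : R -> R) T Q : 0 < T ->
  is_RInt (fun s => g (T * (1 + s) / 2)) (-1) 1 Q -> is_RInt g 0 T (T / 2 * Q).
Proof.
  intros HT H. set (h := fun s => g (T * (1 + s) / 2)) in *.
  assert (Hs : is_RInt h (2 / T * 0 + -1) (2 / T * T + -1) Q).
  { replace (2 / T * 0 + -1) with (-1) by (field; lra). replace (2 / T * T + -1) with 1 by (field; lra). exact H. }
  pose proof (is_RInt_comp_lin h (2 / T) (-1) 0 T Q Hs) as K.
  apply (is_RInt_scal _ _ _ (T / 2)) in K.
  eapply is_RInt_ext'; [|eapply is_RInt_eqv; [|exact K]].
  - intros x Hx. unfold h, scal; simpl. unfold mult; simpl.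
    replace (T * (1 + (2 / T * x + -1)) / 2) with x by (field; lra). field; lra.
  - unfold scal; simpl. unfold mult; simpl. field; lra.
Qed.

Lemma sub_01 (g : R -> R) Q : is_RInt g (-1) 1 Q -> is_RInt (fun y => g (2 * y - 1)) 0 1 (Q / 2).
Proof.
  intros H.
  assert (Hs : is_RInt g (2 * 0 + -1) (2 * 1 + -1) Q).
  { replace (2 * 0 + -1) with (-1) by ring. replace (2 * 1 + -1) with 1 by ring. exact H. }
  pose proof (is_RInt_comp_lin g 2 (-1) 0 1 Q Hs) as K.
  apply (is_RInt_scal _ _ _ (/ 2)) in K.
  eapply is_RInt_ext'; [|eapply is_RInt_eqv; [|exact K]].
  - intros x Hx. unfold scal; simpl. unfold mult; simpl.
    replace (2 * x + -1) with (2 * x - 1) by ring. field.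
  - unfold scal; simpl. unfold mult; simpl. field.
Qed.

Lemma RInt_ext_R (f g : R -> R) a b : (forall x, Rmin a b < x < Rmax a b -> f x = g x) -> RInt f a b = RInt g a b.
Proof. apply RInt_ext. Qed.

Lemma RInt_zero_fun (a b : R) : RInt (fun _ => 0) a b = 0.
Proof. rewrite RInt_const. unfold scal; simpl. unfold mult; simpl. ring. Qed.

Lemma phiI0_sub i j y s : 0 < 1 - y ->
  phiI0 i j ((1 - y) * (1 - s) / 2) y =
  (1 - y) ^ (i + 2) * y / 4 * ((1 - s) * (1 + s) * jacobiP 2 2 i s) * jacobiP (2 * i + 5) 2 j (2 * y - 1).
Proof.
  intros Hy. unfold phiI0, jacobiPS. cbn [lam].
  replace ((1 - (1 - y) * (1 - s) / 2 - y - (1 - y) * (1 - s) / 2) / (1 - (1 - y) * (1 - s) / 2 - y + (1 - y) * (1 - s) / 2))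
    with s by (field; lra).
  replace (1 - (1 - y) * (1 - s) / 2 - y + (1 - y) * (1 - s) / 2) with (1 - y) by ring.
  rewrite pow_add. simpl pow. field.
Qed.

Definition NI (i j : nat) : R := hJ 2 2 i * hJ (2 * i + 5) 2 j / 2 ^ (2 * i + 13).

Lemma NI_pos i j : 0 < NI i j.
Proof.
  unfold NI. apply Rmult_lt_0_compat. apply Rmult_lt_0_compat; apply hJ_pos.
  apply Rinv_0_lt_compat, pow_lt; lra.
Qed.

Lemma jac_gram a b n m : is_RInt (fun s => wJ a b s * jacobiP a b n s * jacobiP a b m s) (-1) 1
  (if (n =? m)%nat then hJ a b n else 0).
Proof.
  destruct (Nat.eqb_spec n m). subst. apply jacobi_norm. apply jacobi_orth; auto.
Qed.

Lemma I_gram i j i' j' : Jxy (fun x y => phiI0 i j x y * phiI0 i' j' x y) =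
  if andb (i =? i')%nat (j =? j')%nat then NI i j else 0.
Proof.
  rewrite Jxy_Jyx by (apply Poly2_mult; apply Poly2_phiI0). unfold Jyx.
  set (W := if (i =? i')%nat then hJ 2 2 i else 0).
  pose proof (jac_gram 2 2 i i') as HW. fold W in HW.
  set (A := fun y => (1 - y) ^ (i + 2) * y / 4 * jacobiP (2 * i + 5) 2 j (2 * y - 1) *
     ((1 - y) ^ (i' + 2) * y / 4 * jacobiP (2 * i' + 5) 2 j' (2 * y - 1))).
  rewrite (RInt_ext _ (fun y => (1 - y) / 2 * (A y * W))).
  2: { intros y Hy. rewrite Rmin01, Rmax01 in Hy by lra. apply is_RInt_unique.
       apply sub_minus; [lra|]. eapply is_RInt_ext'; [|apply (is_RInt_scal' (fun s => wJ 2 2 s * jacobiP 2 2 i s * jacobiP 2 2 i' s) (-1) 1 (A y) W HW)].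
       intros s _. rewrite !phiI0_sub by lra. unfold A, wJ. simpl pow. ring. }
  destruct (Nat.eqb_spec i i').
  - subst i'. unfold W. cbn [andb].
    pose proof (jac_gram (2 * i + 5) 2 j j') as HV.
    apply is_RInt_unique.
    eapply is_RInt_eqv; [|eapply is_RInt_ext'; [|apply sub_01; apply (is_RInt_scal' (fun s => wJ (2 * i + 5) 2 s * jacobiP (2 * i + 5) 2 j s * jacobiP (2 * i + 5) 2 j' s) (-1) 1 (hJ 2 2 i / 2 ^ (2 * i + 12)) _ HV)]].
    + destruct (j =? j')%nat; unfold NI; [|unfold Rdiv; ring].
      replace (2 ^ (2 * i + 13)) with (2 ^ (2 * i + 12) * 2 ^ 1) by (rewrite <- pow_add; f_equal; lia). rewrite pow_1.
      field. apply pow_nonzero; lra.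
    + intros y Hy. unfold A, wJ.
      replace (1 - (2 * y - 1)) with (2 * (1 - y)) by ring. replace (1 + (2 * y - 1)) with (2 * y) by ring.
      rewrite !Rpow_mult_distr.
      replace (2 ^ (2 * i + 12)) with (2 ^ (2 * i + 5) * 2 ^ 7) by (rewrite <- pow_add; f_equal; lia).
      replace ((1 - y) ^ (2 * i + 5)) with ((1 - y) ^ (i + 2) * (1 - y) ^ (i + 2) * (1 - y) ^ 1)
        by (rewrite <- !pow_add; f_equal; lia).
      simpl (2 ^ 7). simpl (2 ^ 2). rewrite pow_1.
      field. apply pow_nonzero; lra.
  - unfold W. cbn [andb].
    rewrite (RInt_ext_R _ (fun _ => 0)) by (intros; ring). apply RInt_zero_fun.
Qed.

Definition gE (j : nat) : R := sqrt ((2 * INR j + 3) / 2).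
Definition Mnm (n m : nat) : R := RInt (fun s => intLegendre n s * intLegendre m s) (-1) 1.

Lemma Mnm_is n m : (1 <= n)%nat -> (1 <= m)%nat ->
  is_RInt (fun s => intLegendre n s * intLegendre m s) (-1) 1 (Mnm n m).
Proof.
  intros. apply (RInt_correct (fun s => intLegendre n s * intLegendre m s)).
  apply cont_ex_RInt. intros. apply cont_mult; apply intLeg_cont; auto.
Qed.

Lemma is_RInt_1my N : is_RInt (fun y => (1 - y) ^ N) 0 1 (/ INR (S N)).
Proof.
  eapply is_RInt_ext'; [|eapply is_RInt_eqv; [|apply (is_RInt_beta 0 1 0 N)]].
  - intros; simpl; ring.
  - unfold betaV. rewrite Rminus_0_r, pow1. simpl (fact 0). replace (0 + N + 1)%nat with (S N) by lia.
    rewrite fact_S_R. pose proof (fact_ne0' N). pose proof (INR_S_ne0 N). simpl (INR 1). field. auto.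
Qed.

Lemma is_RInt_tN N : is_RInt (fun t => t ^ N) 0 1 (/ INR (S N)).
Proof.
  eapply is_RInt_ext'; [|eapply is_RInt_eqv; [|apply (is_RInt_mono_shift 0 1 N)]].
  - intros; simpl. rewrite Rminus_0_r. auto.
  - rewrite Rminus_0_r, pow1. unfold Rdiv. ring.
Qed.

Lemma phiE1_sub j y s : 0 < 1 - y ->
  phiE 1 j ((1 - y) * (1 + s) / 2) y = gE j * ((1 - y) ^ (j + 2) * intLegendre (j + 2) s).
Proof.
  intros Hy. unfold phiE, intLegendreS, gE. cbn [lam edge1 edge2].
  replace ((((1 - y) * (1 + s) / 2) - (1 - (1 - y) * (1 + s) / 2 - y)) / (1 - (1 - y) * (1 + s) / 2 - y + (1 - y) * (1 + s) / 2))
    with s by (field; lra).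
  replace (1 - (1 - y) * (1 + s) / 2 - y + (1 - y) * (1 + s) / 2) with (1 - y) by ring. reflexivity.
Qed.

Lemma phiE2_sub j t s : 0 < t ->
  phiE 2 j (t * (1 - s) / 2) (t - t * (1 - s) / 2) = gE j * (t ^ (j + 2) * intLegendre (j + 2) s).
Proof.
  intros Ht. unfold phiE, intLegendreS, gE. cbn [lam edge1 edge2].
  replace ((t - t * (1 - s) / 2 - t * (1 - s) / 2) / (t * (1 - s) / 2 + (t - t * (1 - s) / 2)))
    with s by (field; lra).
  replace (t * (1 - s) / 2 + (t - t * (1 - s) / 2)) with t by ring. reflexivity.
Qed.

Lemma phiE3_sub j x s : 0 < 1 - x ->
  phiE 3 j x ((1 - x) * (1 - s) / 2) = gE j * ((1 - x) ^ (j + 2) * intLegendre (j + 2) s).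
Proof.
  intros Hx. unfold phiE, intLegendreS, gE. cbn [lam edge1 edge2].
  replace ((1 - x - (1 - x) * (1 - s) / 2 - (1 - x) * (1 - s) / 2) / ((1 - x) * (1 - s) / 2 + (1 - x - (1 - x) * (1 - s) / 2)))
    with s by (field; lra).
  replace ((1 - x) * (1 - s) / 2 + (1 - x - (1 - x) * (1 - s) / 2)) with (1 - x) by ring. reflexivity.
Qed.

Definition GE (j k : nat) : R := gE j * gE k * Mnm (j + 2) (k + 2) / (2 * INR (j + k + 6)).

Lemma outer_val j k M :
  is_RInt (fun y => (1 - y) / 2 * (gE j * gE k * ((1 - y) ^ (j + 2) * (1 - y) ^ (k + 2)) * M)) 0 1
    (gE j * gE k * M / (2 * INR (j + k + 6))).
Proof.
  eapply is_RInt_ext'; [|eapply is_RInt_eqv; [|apply (is_RInt_scal' (fun y => (1 - y) ^ (j + k + 5)) 0 1 (gE j * gE k * M / 2) _ (is_RInt_1my (j + k + 5)))]].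
  - intros. rewrite <- !pow_add. replace (j + k + 5)%nat with (S (j + 2 + (k + 2))) by lia.
    rewrite <- tech_pow_Rmult. field.
  - replace (S (j + k + 5)) with (j + k + 6)%nat by lia. field. apply not_0_INR; lia.
Qed.

Lemma outer_val_t j k M :
  is_RInt (fun t => t / 2 * (gE j * gE k * (t ^ (j + 2) * t ^ (k + 2)) * M)) 0 1
    (gE j * gE k * M / (2 * INR (j + k + 6))).
Proof.
  eapply is_RInt_ext'; [|eapply is_RInt_eqv; [|apply (is_RInt_scal' (fun t => t ^ (j + k + 5)) 0 1 (gE j * gE k * M / 2) _ (is_RInt_tN (j + k + 5)))]].
  - intros. rewrite <- !pow_add. replace (j + k + 5)%nat with (S (j + 2 + (k + 2))) by lia.
    rewrite <- tech_pow_Rmult. field.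
  - replace (S (j + k + 5)) with (j + k + 6)%nat by lia. field. apply not_0_INR; lia.
Qed.

Lemma E_gram1 j k : Jxy (fun x y => phiE 1 j x y * phiE 1 k x y) = GE j k.
Proof.
  rewrite Jxy_Jyx by (apply Poly2_mult; apply Poly2_phiE). unfold Jyx.
  pose proof (Mnm_is (j + 2) (k + 2)) as HM.
  apply is_RInt_unique. eapply is_RInt_ext'; [|apply outer_val].
  intros y Hy. rewrite Rmin01, Rmax01 in Hy by lra. symmetry. apply is_RInt_unique.
  apply sub_plus; [lra|].
  eapply is_RInt_ext'; [|apply (is_RInt_scal' (fun s => intLegendre (j + 2) s * intLegendre (k + 2) s) (-1) 1 (gE j * gE k * ((1 - y) ^ (j + 2) * (1 - y) ^ (k + 2))) _ (HM ltac:(lia) ltac:(lia)))].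
  intros s _. rewrite !phiE1_sub by lra. ring.
Qed.

Lemma E_gram2 j k : Jxy (fun x y => phiE 2 j x y * phiE 2 k x y) = GE j k.
Proof.
  rewrite Jxy_Jtx by (apply Poly2_mult; apply Poly2_phiE). unfold Jtx.
  pose proof (Mnm_is (j + 2) (k + 2)) as HM.
  apply is_RInt_unique. eapply is_RInt_ext'; [|apply outer_val_t].
  intros t Ht. rewrite Rmin01, Rmax01 in Ht by lra. symmetry. apply is_RInt_unique.
  apply (sub_minus (fun x => phiE 2 j x (t - x) * phiE 2 k x (t - x))); [lra|].
  eapply is_RInt_ext'; [|apply (is_RInt_scal' (fun s => intLegendre (j + 2) s * intLegendre (k + 2) s) (-1) 1 (gE j * gE k * (t ^ (j + 2) * t ^ (k + 2))) _ (HM ltac:(lia) ltac:(lia)))].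
  intros s _. rewrite !phiE2_sub by lra. ring.
Qed.

Lemma E_gram3 j k : Jxy (fun x y => phiE 3 j x y * phiE 3 k x y) = GE j k.
Proof.
  unfold Jxy.
  pose proof (Mnm_is (j + 2) (k + 2)) as HM.
  apply is_RInt_unique. eapply is_RInt_ext'; [|apply outer_val].
  intros x Hx. rewrite Rmin01, Rmax01 in Hx by lra. symmetry. apply is_RInt_unique.
  apply (sub_minus (fun y => phiE 3 j x y * phiE 3 k x y)); [lra|].
  eapply is_RInt_ext'; [|apply (is_RInt_scal' (fun s => intLegendre (j + 2) s * intLegendre (k + 2) s) (-1) 1 (gE j * gE k * ((1 - x) ^ (j + 2) * (1 - x) ^ (k + 2))) _ (HM ltac:(lia) ltac:(lia)))].
  intros s _. rewrite !phiE3_sub by lra. ring.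
Qed.

Lemma E_gram m j k : (1 <= m <= 3)%nat -> Jxy (fun x y => phiE m j x y * phiE m k x y) = GE j k.
Proof.
  intros Hm. destruct m as [|[|[|[|m]]]]; try lia.
  apply E_gram1. apply E_gram2. apply E_gram3.
Qed.

Lemma L2sq_Jxy f : L2sq f = Jxy (fun x y => f x y ^ 2).
Proof. reflexivity. Qed.

Lemma Jxy_zero : Jxy (fun _ _ => 0) = 0.
Proof. rewrite (Jxy_IK _ nil). reflexivity. intros; reflexivity. Qed.

Lemma Jxy_ext0 (f : R -> R -> R) : (forall x y, f x y = 0) -> Jxy f = 0.
Proof.
  intros H. unfold Jxy. rewrite (RInt_ext_R _ (fun _ => 0)). apply RInt_zero_fun.
  intros x _. rewrite (RInt_ext_R _ (fun _ => 0)). apply RInt_zero_fun. intros; apply H.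
Qed.

Lemma Jxy_const c : Jxy (fun _ _ => c) = c / 2.
Proof.
  rewrite (Jxy_IK _ ((c, 0%nat, 0%nat) :: nil)). simpl. field. intros; simpl; ring.
Qed.

Lemma phiI0_norm i j : L2sq (phiI0 i j) = NI i j.
Proof.
  rewrite L2sq_Jxy. rewrite <- (Jxy_ext (fun x y => phiI0 i j x y * phiI0 i j x y)).
  rewrite I_gram, !Nat.eqb_refl. reflexivity. intros; ring. apply Poly2_mult; apply Poly2_phiI0.
Qed.

Lemma cI_sq i j : cI i j * cI i j * NI i j = 1.
Proof.
  unfold cI. rewrite phiI0_norm. pose proof (NI_pos i j).
  pose proof (sqrt_lt_R0 _ H). rewrite <- Rinv_mult. rewrite sqrt_sqrt by lra. field. lra.
Qed.

Lemma phiI_gram i j i' j' : Jxy (fun x y => phiI i j x y * phiI i' j' x y) =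
  if andb (i =? i')%nat (j =? j')%nat then 1 else 0.
Proof.
  unfold phiI. rewrite (Jxy_ext _ (fun x y => (cI i j * cI i' j') * (phiI0 i j x y * phiI0 i' j' x y))).
  2: { intros; ring. }
  2: { apply Poly2_mult; apply Poly2_phiI. }
  rewrite Jxy_scal by (apply Poly2_mult; apply Poly2_phiI0). rewrite I_gram.
  destruct (Nat.eqb_spec i i'); destruct (Nat.eqb_spec j j'); simpl; try ring.
  subst. rewrite <- (cI_sq i' j'). ring.
Qed.

Definition FI (p : nat) (a : nat -> nat -> R) (i j : nat) (x y : R) : R :=
  if (i + j + 3 <=? p)%nat then a i j * phiI i j x y else 0.
Definition vI (p : nat) (a : nat -> nat -> R) (i j : nat) : R :=
  if (i + j + 3 <=? p)%nat then a i j ^ 2 else 0.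

Lemma Poly2_FI p a i j : Poly2 (FI p a i j).
Proof.
  unfold FI. destruct (i + j + 3 <=? p)%nat.
  apply Poly2_mult. apply Poly2_const. apply Poly2_phiI. apply Poly2_const.
Qed.

Lemma FI_gram p a i j k l : Jxy (fun x y => FI p a i j x y * FI p a k l x y) =
  if (k =? i)%nat then (if (l =? j)%nat then vI p a i j else 0) else 0.
Proof.
  unfold FI, vI.
  destruct (i + j + 3 <=? p)%nat eqn:E1; destruct (k + l + 3 <=? p)%nat eqn:E2.
  - rewrite (Jxy_ext _ (fun x y => (a i j * a k l) * (phiI i j x y * phiI k l x y))).
    2: { intros; ring. }
    2: { apply Poly2_mult; apply Poly2_mult; try apply Poly2_const; apply Poly2_phiI. }
    rewrite Jxy_scal, phiI_gram by (apply Poly2_mult; apply Poly2_phiI).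
    destruct (Nat.eqb_spec i k); destruct (Nat.eqb_spec j l); destruct (Nat.eqb_spec k i); destruct (Nat.eqb_spec l j);
      simpl; subst; try lia; ring.
  - rewrite Jxy_ext0 by (intros; ring).
    destruct (Nat.eqb_spec k i); destruct (Nat.eqb_spec l j); subst; try reflexivity; congruence.
  - rewrite Jxy_ext0 by (intros; ring).
    destruct (Nat.eqb_spec k i); destruct (Nat.eqb_spec l j); subst; try reflexivity; congruence.
  - rewrite Jxy_ext0 by (intros; ring).
    destruct (Nat.eqb_spec k i); destruct (Nat.eqb_spec l j); subst; reflexivity.
Qed.

Lemma uI_exact p a : L2sq (uI p a) = sqI p a.
Proof.
  rewrite L2sq_Jxy.
  rewrite (Jxy_ext _ (fun x y => Rsum p (fun i => Rsum p (fun k => Rsum p (fun j => Rsum p (fun l =>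
      FI p a i j x y * FI p a k l x y)))))).
  2: { intros. transitivity (uI p a x y * uI p a x y). ring. unfold uI. rewrite Rsum_mult. apply Rsum_ext. intros.
       apply Rsum_ext. intros. rewrite Rsum_mult. reflexivity. }
  2: { apply Poly2_pow, Poly2_uI. }
  rewrite Jxy_Rsum. 2: { intros. apply (Poly2_Rsum _ (fun k0 x y => Rsum p (fun j => Rsum p (fun l => FI p a k j x y * FI p a k0 l x y)))).
    intros. apply (Poly2_Rsum _ (fun j x y => Rsum p (fun l => FI p a k j x y * FI p a k0 l x y))). intros.
    apply (Poly2_Rsum _ (fun l x y => FI p a k k1 x y * FI p a k0 l x y)). intros. apply Poly2_mult; apply Poly2_FI. }
  unfold sqI. apply Rsum_ext. intros i Hi.
  rewrite Jxy_Rsum. 2: { intros.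
    apply (Poly2_Rsum _ (fun j x y => Rsum p (fun l => FI p a i j x y * FI p a k l x y))). intros.
    apply (Poly2_Rsum _ (fun l x y => FI p a i k0 x y * FI p a k l x y)). intros. apply Poly2_mult; apply Poly2_FI. }
  rewrite (Rsum_ext p _ (fun k => if (k =? i)%nat then Rsum p (fun j => vI p a i j) else 0)).
  - rewrite (Rsum_delta p i (fun _ => Rsum p (fun j => vI p a i j))) by auto. apply Rsum_ext. intros. reflexivity.
  - intros k Hk. rewrite Jxy_Rsum. 2: { intros.
      apply (Poly2_Rsum _ (fun l x y => FI p a i k0 x y * FI p a k l x y)). intros. apply Poly2_mult; apply Poly2_FI. }
    destruct (Nat.eqb_spec k i).
    + subst. apply Rsum_ext. intros j Hj. rewrite Jxy_Rsum by (intros; apply Poly2_mult; apply Poly2_FI).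
      rewrite (Rsum_ext p _ (fun l => if (l =? j)%nat then vI p a i j else 0)).
      apply (Rsum_delta p j (fun _ => vI p a i j)); auto.
      intros l Hl. rewrite FI_gram, Nat.eqb_refl. reflexivity.
    + apply Rsum_zero. intros j Hj. rewrite Jxy_Rsum by (intros; apply Poly2_mult; apply Poly2_FI).
      apply Rsum_zero. intros l Hl. rewrite FI_gram. destruct (Nat.eqb_spec k i); [lia|reflexivity].
Qed.

Lemma Mnm_sym n m : Mnm n m = Mnm m n.
Proof. unfold Mnm. apply RInt_ext_R. intros; ring. Qed.

Lemma GE_sym j k : GE j k = GE k j.
Proof. unfold GE. rewrite Mnm_sym. replace (k + j + 6)%nat with (j + k + 6)%nat by lia. rewrite (Rmult_comm (gE j)). reflexivity. Qed.

Lemma GE_orth j k : (k + 3 <= j)%nat -> GE j k = 0.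
Proof.
  intros H. unfold GE. replace (Mnm (j + 2) (k + 2)) with 0. unfold Rdiv; ring.
  symmetry. apply is_RInt_unique. apply intLeg_orth; lia.
Qed.

Lemma gE_sq j : gE j * gE j = (2 * INR j + 3) / 2.
Proof. unfold gE. apply sqrt_sqrt. pose proof (pos_INR j). lra. Qed.

Lemma div_le a b y : 0 < y -> a <= b * y -> a / y <= b.
Proof.
  intros Hy H. apply Rmult_le_reg_r with y; auto. unfold Rdiv.
  replace (a * / y * y) with a by (field; lra). lra.
Qed.
Lemma div_le2 (M : R) : M <= 8 -> M <= 8.
Proof. auto. Qed.

Lemma GE_diag_le j : GE j j <= 2.
Proof.
  unfold GE. rewrite gE_sq.
  assert (HM : Mnm (j + 2) (j + 2) <= 8).
  { unfold Mnm. rewrite (RInt_ext_R _ (fun s => intLegendre (j + 2) s ^ 2)) by (intros; ring).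
    apply intLeg_sq_le. lia. }
  rewrite !plus_INR. simpl (INR 6). pose proof (pos_INR j).
  apply div_le; [lra|]. apply div_le2 in HM. 
  assert (0 <= 2 * INR j + 3) by lra. nra.
Qed.

Lemma E_gram_comb m j k s : (1 <= m <= 3)%nat ->
  Jxy (fun x y => (phiE m j x y + s * phiE m k x y) ^ 2) = GE j j + 2 * s * GE j k + s ^ 2 * GE k k.
Proof.
  intros Hm. pose proof (Poly2_phiE m j). pose proof (Poly2_phiE m k).
  rewrite (Jxy_ext _ (fun x y => (phiE m j x y * phiE m j x y + (2 * s) * (phiE m j x y * phiE m k x y)) + s ^ 2 * (phiE m k x y * phiE m k x y))).
  2: { intros; ring. }
  2: { apply Poly2_pow. apply Poly2_plus; auto. apply Poly2_scal; auto. }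
  assert (PA : Poly2 (fun x y => phiE m j x y * phiE m j x y)) by (apply Poly2_mult; auto).
  assert (PB : Poly2 (fun x y => phiE m j x y * phiE m k x y)) by (apply Poly2_mult; auto).
  assert (PC : Poly2 (fun x y => phiE m k x y * phiE m k x y)) by (apply Poly2_mult; auto).
  assert (PB2 : Poly2 (fun x y => 2 * s * (phiE m j x y * phiE m k x y))) by (apply Poly2_scal; auto).
  assert (PC2 : Poly2 (fun x y => s ^ 2 * (phiE m k x y * phiE m k x y))) by (apply Poly2_scal; auto).
  rewrite (Jxy_plus (fun x y => phiE m j x y * phiE m j x y + 2 * s * (phiE m j x y * phiE m k x y))
                    (fun x y => s ^ 2 * (phiE m k x y * phiE m k x y))) by (try apply Poly2_plus; auto).
  rewrite (Jxy_plus (fun x y => phiE m j x y * phiE m j x y) (fun x y => 2 * s * (phiE m j x y * phiE m k x y))) by auto.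
  rewrite (Jxy_scal (2 * s) (fun x y => phiE m j x y * phiE m k x y)) by auto.
  rewrite (Jxy_scal (s ^ 2) (fun x y => phiE m k x y * phiE m k x y)) by auto.
  rewrite !E_gram by auto. ring.
Qed.

Lemma GE_abs m j k : (1 <= m <= 3)%nat -> -2 <= GE j k <= 2.
Proof.
  intros Hm.
  assert (H1 : 0 <= GE j j + 2 * 1 * GE j k + 1 ^ 2 * GE k k).
  { rewrite <- (E_gram_comb m) by auto. apply Jxy_ge0. apply Poly2_pow. apply Poly2_plus. apply Poly2_phiE.
    apply Poly2_scal, Poly2_phiE. intros; apply pow2_ge_0. }
  assert (H2 : 0 <= GE j j + 2 * (-1) * GE j k + (-1) ^ 2 * GE k k).
  { rewrite <- (E_gram_comb m) by auto. apply Jxy_ge0. apply Poly2_pow. apply Poly2_plus. apply Poly2_phiE.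
    apply Poly2_scal, Poly2_phiE. intros; apply pow2_ge_0. }
  pose proof (GE_diag_le j). pose proof (GE_diag_le k). simpl in H1, H2. lra.
Qed.

Definition band (j k : nat) : bool := andb (j <=? k + 2)%nat (k <=? j + 2)%nat.

Lemma band_sym j k : band j k = band k j.
Proof. unfold band. apply Bool.andb_comm. Qed.

Lemma count_band N j : Rsum N (fun k => if band j k then 1 else 0) = INR (Nat.min N (j + 3) - (j - 2)).
Proof.
  induction N. { rewrite Rsum_0. simpl. reflexivity. }
  rewrite Rsum_S, IHN. unfold band.
  destruct (Nat.leb_spec j (N + 2)); destruct (Nat.leb_spec N (j + 2)); cbn [andb];
  try (replace (Nat.min (S N) (j + 3) - (j - 2))%nat with (S (Nat.min N (j + 3) - (j - 2))) by lia; rewrite S_INR; ring);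
  replace (Nat.min (S N) (j + 3) - (j - 2))%nat with (Nat.min N (j + 3) - (j - 2))%nat by lia; ring.
Qed.

Lemma count_band_le N j : Rsum N (fun k => if band j k then 1 else 0) <= 5.
Proof.
  rewrite count_band. replace 5 with (INR 5) by (simpl; ring). apply le_INR. lia.
Qed.

Lemma band_sum N (a : nat -> R) : Rsum N (fun j => Rsum N (fun k => if band j k then a j ^ 2 else 0)) <= 5 * Rsum N (fun j => a j ^ 2).
Proof.
  rewrite <- Rsum_scal. apply Rsum_le. intros j Hj.
  rewrite (Rsum_ext N _ (fun k => a j ^ 2 * (if band j k then 1 else 0))).
  2: { intros; destruct (band j i); ring. }
  rewrite Rsum_scal. pose proof (count_band_le N j). pose proof (pow2_ge_0 (a j)). nra.
Qed.

Lemma uE_bound p m a : (1 <= m <= 3)%nat -> L2sq (uE p m a) <= 10 * sqE p a.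
Proof.
  intros Hm. set (N := Nat.pred p). rewrite L2sq_Jxy.
  rewrite (Jxy_ext _ (fun x y => Rsum N (fun j => Rsum N (fun k => (a j * a k) * (phiE m j x y * phiE m k x y))))).
  2: { intros. unfold uE. fold N. transitivity (Rsum N (fun j => a j * phiE m j x y) * Rsum N (fun j => a j * phiE m j x y)). ring.
       rewrite Rsum_mult. apply Rsum_ext; intros; apply Rsum_ext; intros; ring. }
  2: { apply Poly2_pow, Poly2_uE. }
  rewrite Jxy_Rsum. 2: { intros. apply (Poly2_Rsum _ (fun k0 x y => (a k * a k0) * (phiE m k x y * phiE m k0 x y))). intros.
    apply Poly2_scal, Poly2_mult; apply Poly2_phiE. }
  rewrite (Rsum_ext N _ (fun j => Rsum N (fun k => a j * a k * GE j k))).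
  2: { intros. rewrite Jxy_Rsum. apply Rsum_ext. intros. rewrite Jxy_scal, E_gram; auto.
       apply Poly2_mult; apply Poly2_phiE. intros. apply Poly2_scal, Poly2_mult; apply Poly2_phiE. }
  eapply Rle_trans.
  apply (Rsum_le N _ (fun j => Rsum N (fun k => (if band j k then a j ^ 2 else 0) + (if band j k then a k ^ 2 else 0)))).
  { intros j Hj. apply Rsum_le. intros k Hk. destruct (band j k) eqn:Eb.
    - change (a j * a k * GE j k <= a j ^ 2 + a k ^ 2).
      pose proof (GE_abs m j k Hm).
      assert (0 <= (2 - GE j k) * (a j + a k) ^ 2) by (apply Rmult_le_pos; [lra|apply pow2_ge_0]).
      assert (0 <= (2 + GE j k) * (a j - a k) ^ 2) by (apply Rmult_le_pos; [lra|apply pow2_ge_0]).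
      nra.
    - change (a j * a k * GE j k <= 0 + 0). unfold band in Eb. apply Bool.andb_false_iff in Eb. destruct Eb as [Eb|Eb]; apply Nat.leb_gt in Eb.
      + rewrite GE_orth by lia. lra.
      + rewrite GE_sym, GE_orth by lia. lra. }
  rewrite (Rsum_ext N _ (fun j => Rsum N (fun k => if band j k then a j ^ 2 else 0) + Rsum N (fun k => if band j k then a k ^ 2 else 0))).
  2: { intros. rewrite Rsum_plus. reflexivity. }
  rewrite Rsum_plus. rewrite (Rsum_swap N N (fun j k => if band j k then a k ^ 2 else 0)).
  rewrite (Rsum_ext N (fun j => Rsum N (fun i => if band i j then a j ^ 2 else 0)) (fun j => Rsum N (fun i => if band j i then a j ^ 2 else 0))).
  2: { intros. apply Rsum_ext. intros. rewrite band_sym. reflexivity. }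
  pose proof (band_sum N a). unfold sqE. fold N. lra.
Qed.

Lemma uV_eq aV x y : uV aV x y = aV 1%nat * lam 1 x y + aV 2%nat * lam 2 x y + aV 3%nat * lam 3 x y.
Proof. unfold uV, phiV, Rsum. simpl. ring. Qed.

Lemma sqV_eq aV : sqV aV = aV 1%nat ^ 2 + aV 2%nat ^ 2 + aV 3%nat ^ 2.
Proof. unfold sqV, Rsum. simpl. ring. Qed.

Lemma sqV_ge0 aV : 0 <= sqV aV.
Proof. rewrite sqV_eq. pose proof (pow2_ge_0 (aV 1%nat)). pose proof (pow2_ge_0 (aV 2%nat)). pose proof (pow2_ge_0 (aV 3%nat)). lra. Qed.

Lemma sqE_ge0 p a : 0 <= sqE p a.
Proof. unfold sqE. apply Rsum_nonneg. intros; apply pow2_ge_0. Qed.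

Lemma sqI_ge0 p a : 0 <= sqI p a.
Proof. unfold sqI. apply Rsum_nonneg. intros. apply Rsum_nonneg. intros. destruct (i + i0 + 3 <=? p)%nat. apply pow2_ge_0. lra. Qed.

Lemma uV_bound aV : L2sq (uV aV) <= sqV aV.
Proof.
  rewrite L2sq_Jxy. eapply Rle_trans. apply (Jxy_le _ (fun _ _ => sqV aV)).
  - apply Poly2_pow, Poly2_uV.
  - apply Poly2_const.
  - intros x y [H1 [H2 H3]]. rewrite uV_eq, sqV_eq. cbn [lam].
    set (a1 := aV 1%nat). set (a2 := aV 2%nat). set (a3 := aV 3%nat).
    set (l1 := 1 - x - y).
    assert (CS : (a1 * l1 + a2 * x + a3 * y) ^ 2 <= (a1 ^ 2 + a2 ^ 2 + a3 ^ 2) * (l1 ^ 2 + x ^ 2 + y ^ 2)).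
    { pose proof (pow2_ge_0 (a1 * x - a2 * l1)). pose proof (pow2_ge_0 (a1 * y - a3 * l1)). pose proof (pow2_ge_0 (a2 * y - a3 * x)). nra. }
    assert (L : l1 ^ 2 + x ^ 2 + y ^ 2 <= 1).
    { assert (l1 + x + y = 1) by (unfold l1; ring). assert (0 < l1) by (unfold l1; lra). nra. }
    pose proof (pow2_ge_0 a1). pose proof (pow2_ge_0 a2). pose proof (pow2_ge_0 a3). nra.
  - rewrite Jxy_const. pose proof (sqV_ge0 aV). lra.
Qed.

Lemma sq5 a b c d e : (a + b + c + d + e) ^ 2 <= 5 * (a ^ 2 + b ^ 2 + c ^ 2 + d ^ 2 + e ^ 2).
Proof.
  pose proof (pow2_ge_0 (a - b)). pose proof (pow2_ge_0 (a - c)). pose proof (pow2_ge_0 (a - d)).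
  pose proof (pow2_ge_0 (a - e)). pose proof (pow2_ge_0 (b - c)). pose proof (pow2_ge_0 (b - d)).
  pose proof (pow2_ge_0 (b - e)). pose proof (pow2_ge_0 (c - d)). pose proof (pow2_ge_0 (c - e)).
  pose proof (pow2_ge_0 (d - e)). nra.
Qed.

Theorem lemma4p2 :
  exists C : R, 0 < C /\
  forall (p : nat) (u : R -> R -> R) (aV : nat -> R) (aE : nat -> nat -> R)
         (aI : nat -> nat -> R),
    is_poly_deg p u ->
    (forall x y, inK x y ->
       u x y = uV aV x y + uE p 1 (aE 1%nat) x y + uE p 2 (aE 2%nat) x y
               + uE p 3 (aE 3%nat) x y + uI p aI x y) ->
    L2sq (uV aV) <= C * sqV aV /\
    (forall m : nat, (1 <= m <= 3)%nat -> L2sq (uE p m (aE m)) <= C * sqE p (aE m)) /\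
    L2sq (uI p aI) = sqI p aI /\
    L2sq u <= C * (sqV aV + (sqE p (aE 1%nat) + sqE p (aE 2%nat) + sqE p (aE 3%nat))
                   + sqI p aI).
Proof.
  exists 50. split; [lra|]. intros p u aV aE aI Hpu Hu.
  pose proof (uV_bound aV) as BV. pose proof (sqV_ge0 aV) as SV.
  pose proof (uI_exact p aI) as BI. pose proof (sqI_ge0 p aI) as SI.
  pose proof (uE_bound p 1 (aE 1%nat) ltac:(lia)) as B1.
  pose proof (uE_bound p 2 (aE 2%nat) ltac:(lia)) as B2.
  pose proof (uE_bound p 3 (aE 3%nat) ltac:(lia)) as B3.
  pose proof (sqE_ge0 p (aE 1%nat)). pose proof (sqE_ge0 p (aE 2%nat)). pose proof (sqE_ge0 p (aE 3%nat)).
  split; [lra|]. split.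
  { intros m Hm. pose proof (uE_bound p m (aE m) Hm). pose proof (sqE_ge0 p (aE m)). lra. }
  split; [auto|].
  assert (PV := Poly2_uV aV). assert (P1 := Poly2_uE p 1 (aE 1%nat)). assert (P2 := Poly2_uE p 2 (aE 2%nat)).
  assert (P3 := Poly2_uE p 3 (aE 3%nat)). assert (PI := Poly2_uI p aI).
  assert (Hle : L2sq u <= 5 * (L2sq (uV aV) + L2sq (uE p 1 (aE 1%nat)) + L2sq (uE p 2 (aE 2%nat)) + L2sq (uE p 3 (aE 3%nat)) + L2sq (uI p aI))).
  { rewrite !L2sq_Jxy.
    rewrite <- (Jxy_plus (fun x y => uV aV x y ^ 2)), <- Jxy_plus, <- Jxy_plus, <- Jxy_plus, <- Jxy_scal;
      try (repeat apply Poly2_plus; apply Poly2_pow; auto); try (apply Poly2_pow; auto).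
    apply Jxy_le. apply Poly2_pow. apply Poly2_polydeg with p; auto.
    apply Poly2_scal. repeat apply Poly2_plus; apply Poly2_pow; auto.
    intros x y Hxy. rewrite Hu. apply sq5. destruct Hxy as [Ha [Hb Hc]]. red; lra. }
  lra.
Qed.
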